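(* Let $X$ be a Peano continuum with metric $d$, let $x\in X$, and let $(f_n)_{n\in\mathbb{N}}$ (with $\mathbb{N}=\{0,1,2,\dots\}$) be continuous loops $f_n\colon[0,1]\to X$ with $f_n(0)=f_n(1)=x$, such that $\operatorname{diam} f_n([0,1])\le 2^{-n}$ and no $f_n$ is nulhomologous (i.e. each $f_n$ represents a nonzero element of $H_1(X)$). Let $f_n^1=f_n$ and let $f_n^0$ be the constant loop at $x$. For $\alpha\in\{0,1\}^{\mathbb{N}}$ define the infinite concatenation $f^\alpha=f_0^{\alpha(0)}\ast f_1^{\alpha(1)}\ast f_2^{\alpha(2)}\ast\cdots\colon[0,1]\to X$ by $f^\alpha(t)=f_n^{\alpha(n)}\big(2^{n+1}(t-(1-2^{-n}))\big)$ for $t\in[1-2^{-n},1-2^{-n-1}]$ and $f^\alpha(1)=x$ (this is a continuous loop at $x$). Define a relation $\sim$ on the Cantor set $\{0,1\}^{\mathbb{N}}$ by $\alpha\sim\beta$ iff $f^\alpha$ and $f^\beta$ are homologous (represent the same element of $H_1(X)$). Then $\sim$ is an analytic equivalence relation on $\{0,1\}^{\mathbb{N}}$ (i.e. an analytic subset of $\{0,1\}^{\mathbb{N}}\times\{0,1\}^{\mathbb{N}}$ which is an equivalence relation), and if $\alpha,\beta\in\{0,1\}^{\mathbb{N}}$ differ at exactly one coordinate then $\alpha\not\sim\beta$.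
   Context: A Peano continuum is a connected, locally connected compact metric space. The Cantor set $\{0,1\}^{\mathbb{N}}$ carries the product topology with $\{0,1\}$ discrete. A space is Polish if it is separable and completely metrizable. If $Y$ is Polish, a set $A\subseteq Y$ is analytic if there is a Polish space $Z$ and a closed set $D\subseteq Y\times Z$ such that $A$ is the projection of $D$ to $Y$. *)

(* Defs.v *)
From Stdlib Require Import Reals ZArith List.
Open Scope R_scope.

Definition is_metric {X : Type} (d : X -> X -> R) : Prop :=
  (forall x y, 0 <= d x y) /\
  (forall x y, d x y = 0 <-> x = y) /\
  (forall x y, d x y = d y x) /\
  (forall x y z, d x z <= d x y + d y z).

Definition is_open {X : Type} (d : X -> X -> R) (U : X -> Prop) : Prop :=
  forall y, U y -> exists eps, eps > 0 /\ forall z, d y z < eps -> U z.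

Definition compact_space {X : Type} (d : X -> X -> R) : Prop :=
  forall (I : Type) (U : I -> X -> Prop),
    (forall i, is_open d (U i)) -> (forall y, exists i, U i y) ->
    exists l : list I, forall y, exists i, In i l /\ U i y.

(* a subset V is connected in the subspace topology *)
Definition connected_subset {X : Type} (d : X -> X -> R) (V : X -> Prop) : Prop :=
  forall A B : X -> Prop, is_open d A -> is_open d B ->
    (forall y, V y -> A y \/ B y) ->
    (forall y, ~ (V y /\ A y /\ B y)) ->
    (forall y, V y -> A y) \/ (forall y, V y -> B y).

Definition connected_space {X : Type} (d : X -> X -> R) : Prop :=
  connected_subset d (fun _ => True).

Definition locally_connected {X : Type} (d : X -> X -> R) : Prop :=
  forall y U, is_open d U -> U y ->
    exists V, is_open d V /\ V y /\ (forall z, V z -> U z) /\ connected_subset d V.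

(* Peano continuum: connected, locally connected compact metric space
   (nonempty, as a continuum) *)
Definition peano_continuum {X : Type} (d : X -> X -> R) : Prop :=
  is_metric d /\ compact_space d /\ connected_space d /\ locally_connected d
  /\ inhabited X.

(* ---------- paths and loops (maps [0,1] -> X, values outside [0,1] ignored) ---------- *)
Definition unit_int (t : R) : Prop := 0 <= t <= 1.

Definition cont_on_I {X : Type} (d : X -> X -> R) (p : R -> X) : Prop :=
  forall t, unit_int t -> forall eps, eps > 0 ->
    exists delta, delta > 0 /\
      forall s, unit_int s -> Rabs (s - t) < delta -> d (p s) (p t) < eps.

Definition is_loop {X : Type} (d : X -> X -> R) (p : R -> X) (x : X) : Prop :=
  cont_on_I d p /\ p 0 = x /\ p 1 = x.

(* standard 2-simplex {(s,t) | s,t >= 0, s + t <= 1}, vertices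
   e0 = (0,0), e1 = (1,0), e2 = (0,1) *)
Definition simplex2_pt (s t : R) : Prop := 0 <= s /\ 0 <= t /\ s + t <= 1.

Definition cont_on_simplex2 {X : Type} (d : X -> X -> R) (sg : R -> R -> X) : Prop :=
  forall s t, simplex2_pt s t -> forall eps, eps > 0 ->
    exists delta, delta > 0 /\
      forall s' t', simplex2_pt s' t' -> Rabs (s' - s) + Rabs (t' - t) < delta ->
        d (sg s' t') (sg s t) < eps.

(* faces d_i (omit vertex e_i), parametrized affinely by [0,1] *)
Definition face0 {X : Type} (sg : R -> R -> X) : R -> X := fun u => sg (1 - u) u.
Definition face1 {X : Type} (sg : R -> R -> X) : R -> X := fun u => sg 0 u.
Definition face2 {X : Type} (sg : R -> R -> X) : R -> X := fun u => sg u 0.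

(* singular 1-chains / 2-chains as finite formal Z-combinations *)
Definition chain1 (X : Type) := list (Z * (R -> X)).
Definition chain2 (X : Type) := list (Z * (R -> R -> X)).

Definition bd2 {X : Type} (C : chain2 X) : chain1 X :=
  flat_map (fun e => (fst e, face0 (snd e)) :: ((- fst e)%Z, face1 (snd e))
                      :: (fst e, face2 (snd e)) :: nil) C.

Definition neg_chain1 {X : Type} (c : chain1 X) : chain1 X :=
  map (fun e => ((- fst e)%Z, snd e)) c.

(* two 1-simplices are the same singular simplex iff equal on [0,1] *)
Definition same_simplex1 {X : Type} (p q : R -> X) : Prop :=
  forall t, unit_int t -> p t = q t.

Inductive coef {X : Type} : chain1 X -> (R -> X) -> Z -> Prop :=
| coef_nil : forall p, coef nil p 0%Z
| coef_same : forall k q c p m, same_simplex1 q p -> coef c p m ->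
    coef ((k, q) :: c) p (k + m)%Z
| coef_other : forall k q c p m, ~ same_simplex1 q p -> coef c p m ->
    coef ((k, q) :: c) p m.

Definition null_chain1 {X : Type} (c : chain1 X) : Prop :=
  forall p, coef c p 0%Z.

Definition singular_chain2 {X : Type} (d : X -> X -> R) (C : chain2 X) : Prop :=
  forall e, In e C -> cont_on_simplex2 d (snd e).

Definition homologous {X : Type} (d : X -> X -> R) (f g : R -> X) : Prop :=
  exists C : chain2 X, singular_chain2 d C /\
    null_chain1 ((1%Z, f) :: ((-1)%Z, g) :: neg_chain1 (bd2 C)).

Definition nulhomologous {X : Type} (d : X -> X -> R) (f : R -> X) : Prop :=
  exists C : chain2 X, singular_chain2 d C /\
    null_chain1 ((1%Z, f) :: neg_chain1 (bd2 C)).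

Definition cantor := nat -> bool.

Definition fpow {X : Type} (f : nat -> R -> X) (x : X) (n : nat) (b : bool) : R -> X :=
  if b then f n else (fun _ => x).

(* for 0 <= t < 1, blk t is the n with 1 - 2^-n <= t < 1 - 2^-(n+1),
   i.e. floor(log_2 (1/(1-t))) *)
Definition blk (t : R) : nat := Z.to_nat (Int_part (- ln (1 - t) / ln 2)).

Definition concat {X : Type} (f : nat -> R -> X) (x : X) (a : cantor) (t : R) : X :=
  if Rlt_dec t 1 then
    let n := blk t in fpow f x n (a n) (2 ^ (n + 1) * (t - (1 - (/ 2) ^ n)))
  else x.

Definition sim_rel {X : Type} (d : X -> X -> R) (f : nat -> R -> X) (x : X)
  (a b : cantor) : Prop :=
  homologous d (concat f x a) (concat f x b).

Definition complete_metric {Z : Type} (dZ : Z -> Z -> R) : Prop :=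
  forall u : nat -> Z,
    (forall eps, eps > 0 -> exists N, forall m n, (m >= N)%nat -> (n >= N)%nat ->
        dZ (u m) (u n) < eps) ->
    exists z, forall eps, eps > 0 -> exists N, forall n, (n >= N)%nat -> dZ (u n) z < eps.

(* a countable dense subset, enumerated by s (None entries allowed so that
   the empty space is separable) *)
Definition separable_metric {Z : Type} (dZ : Z -> Z -> R) : Prop :=
  exists s : nat -> option Z,
    forall z eps, eps > 0 -> exists n w, s n = Some w /\ dZ z w < eps.

Definition polish_metric {Z : Type} (dZ : Z -> Z -> R) : Prop :=
  is_metric dZ /\ complete_metric dZ /\ separable_metric dZ.

(* closedness of D in (cantor x cantor) x Z with the product topology
   (cantor = {0,1}^N with product of discrete topologies):
   the complement is open, i.e. contains a basic open neighbourhood of each point *)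
Definition closed_in_CCZ {Z : Type} (dZ : Z -> Z -> R)
  (D : cantor -> cantor -> Z -> Prop) : Prop :=
  forall a b z, ~ D a b z ->
    exists (N : nat) (eps : R), eps > 0 /\
      forall a' b' z', (forall i, (i < N)%nat -> a' i = a i /\ b' i = b i) ->
        dZ z z' < eps -> ~ D a' b' z'.

Definition analytic_CC (A : cantor -> cantor -> Prop) : Prop :=
  exists (Z : Type) (dZ : Z -> Z -> R) (D : cantor -> cantor -> Z -> Prop),
    polish_metric dZ /\ closed_in_CCZ dZ D /\
    forall a b, A a b <-> exists z, D a b z.

Definition equivalence_rel {T : Type} (E : T -> T -> Prop) : Prop :=
  (forall a, E a a) /\ (forall a b, E a b -> E b a) /\
  (forall a b c, E a b -> E b c -> E a c).

Definition differ_exactly_once (a b : cantor) : Prop :=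
  exists k, a k <> b k /\ forall j, j <> k -> a j = b j.

(* Main.v *)
Require Import Defs.
From Coquelicot Require Import Coquelicot.
From Stdlib Require Import Reals ZArith List Lia Lra Classical ClassicalEpsilon Cantor FunctionalExtensionality Rtopology.
Open Scope R_scope.
Notation concat := Defs.concat.

Definition ind {X : Type} (q p : R -> X) : Z :=
  if excluded_middle_informative (same_simplex1 q p) then 1%Z else 0%Z.

Fixpoint cf {X : Type} (c : chain1 X) (p : R -> X) : Z :=
  match c with
  | nil => 0%Z
  | (k, q) :: c' => (k * ind q p + cf c' p)%Z
  end.

Lemma coef_cf {X : Type} (c : chain1 X) p : coef c p (cf c p).
Proof.
  induction c as [|[k q] c IH]; simpl.
  - constructor.
  - unfold ind. destruct (excluded_middle_informative (same_simplex1 q p)).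
    + replace (k * 1 + cf c p)%Z with (k + cf c p)%Z by ring. now constructor.
    + replace (k * 0 + cf c p)%Z with (cf c p)%Z by ring. now constructor.
Qed.

Lemma coef_unique {X : Type} (c : chain1 X) p m : coef c p m -> m = cf c p.
Proof.
  induction 1; simpl; unfold ind; auto.
  - destruct (excluded_middle_informative (same_simplex1 q p)); [lia|contradiction].
  - destruct (excluded_middle_informative (same_simplex1 q p)); [contradiction|lia].
Qed.

Lemma null_cf {X : Type} (c : chain1 X) : null_chain1 c <-> forall p, cf c p = 0%Z.
Proof.
  split; intros H p.
  - symmetry; apply coef_unique, H.
  - rewrite <- (H p). apply coef_cf.
Qed.

Lemma cf_app {X : Type} (c1 c2 : chain1 X) p : cf (c1 ++ c2) p = (cf c1 p + cf c2 p)%Z.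
Proof. induction c1 as [|[k q] c IH]; simpl; lia. Qed.

Lemma cf_neg {X : Type} (c : chain1 X) p : cf (neg_chain1 c) p = (- cf c p)%Z.
Proof. induction c as [|[k q] c IH]; simpl; lia. Qed.

Lemma bd2_app {X : Type} (C1 C2 : chain2 X) : bd2 (C1 ++ C2) = bd2 C1 ++ bd2 C2.
Proof. unfold bd2. apply flat_map_app. Qed.

Lemma bd2_cons {X : Type} k (s : R -> R -> X) C :
  bd2 ((k, s) :: C) = (k, face0 s) :: ((-k)%Z, face1 s) :: (k, face2 s) :: bd2 C.
Proof. reflexivity. Qed.

Lemma singular_app {X : Type} (d : X -> X -> R) C1 C2 :
  singular_chain2 d C1 -> singular_chain2 d C2 -> singular_chain2 d (C1 ++ C2).
Proof. intros H1 H2 e He. apply in_app_or in He. destruct He; auto. Qed.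

Lemma same_refl {X : Type} (p : R -> X) : same_simplex1 p p.
Proof. intros t _; reflexivity. Qed.
Lemma same_sym {X : Type} (p q : R -> X) : same_simplex1 p q -> same_simplex1 q p.
Proof. intros H t Ht; symmetry; auto. Qed.
Lemma same_trans {X : Type} (p q r : R -> X) :
  same_simplex1 p q -> same_simplex1 q r -> same_simplex1 p r.
Proof. intros H1 H2 t Ht; rewrite H1; auto. Qed.

Lemma ind_same_l {X : Type} (q q' p : R -> X) :
  same_simplex1 q q' -> ind q p = ind q' p.
Proof.
  intro H; unfold ind.
  destruct (excluded_middle_informative (same_simplex1 q p)) as [a|a];
  destruct (excluded_middle_informative (same_simplex1 q' p)) as [b|b]; auto.
  - exfalso; apply b; eapply same_trans; [apply same_sym, H|exact a].
  - exfalso; apply a; eapply same_trans; [apply H|exact b].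
Qed.

Lemma homologous_cf {X : Type} (d : X -> X -> R) f g :
  homologous d f g <-> exists C, singular_chain2 d C /\
     forall p, (ind f p - ind g p = cf (bd2 C) p)%Z.
Proof.
  unfold homologous. split; intros [C [HC H]]; exists C; split; auto.
  - intro p. rewrite null_cf in H. specialize (H p). cbn [cf] in H.
    rewrite cf_neg in H. lia.
  - rewrite null_cf. intro p. cbn [cf]. rewrite cf_neg. specialize (H p). lia.
Qed.

Lemma nulhomologous_cf {X : Type} (d : X -> X -> R) f :
  nulhomologous d f <-> exists C, singular_chain2 d C /\
     forall p, (ind f p = cf (bd2 C) p)%Z.
Proof.
  unfold nulhomologous. split; intros [C [HC H]]; exists C; split; auto.
  - intro p. rewrite null_cf in H. specialize (H p). cbn [cf] in H.
    rewrite cf_neg in H. lia.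
  - rewrite null_cf. intro p. cbn [cf]. rewrite cf_neg. specialize (H p). lia.
Qed.

Definition negC {X : Type} (C : chain2 X) : chain2 X :=
  map (fun e => ((- fst e)%Z, snd e)) C.

Lemma cf_bd2_negC {X : Type} (C : chain2 X) p : cf (bd2 (negC C)) p = (- cf (bd2 C) p)%Z.
Proof. induction C as [|[k s] C IH]; simpl; [reflexivity|]. lia. Qed.

Lemma singular_negC {X : Type} (d : X -> X -> R) C :
  singular_chain2 d C -> singular_chain2 d (negC C).
Proof.
  intros H e He. unfold negC in He. apply in_map_iff in He.
  destruct He as [e' [<- He']]. simpl. apply H, He'.
Qed.

Lemma sim_equiv {X : Type} (d : X -> X -> R) f x :
  equivalence_rel (sim_rel d f x).
Proof.
  unfold sim_rel; split; [|split].
  - intro a. apply homologous_cf. exists nil. split.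
    + intros e He; destruct He.
    + intro p; simpl; lia.
  - intros a b H. apply homologous_cf in H. destruct H as [C [HC H]].
    apply homologous_cf. exists (negC C). split.
    + now apply singular_negC.
    + intro p. rewrite cf_bd2_negC. specialize (H p). lia.
  - intros a b c H1 H2. apply homologous_cf in H1, H2.
    destruct H1 as [C1 [HC1 H1]], H2 as [C2 [HC2 H2]].
    apply homologous_cf. exists (C1 ++ C2). split.
    + now apply singular_app.
    + intro p. rewrite bd2_app, cf_app. specialize (H1 p); specialize (H2 p). lia.
Qed.


Lemma ln_le' x y : 0 < x -> x <= y -> ln x <= ln y.
Proof. intros Hx [H|H]; [left; apply ln_increasing; auto|right; subst; auto]. Qed.

Lemma half_pow_pos n : 0 < (/2)^n.
Proof. apply pow_lt; lra. Qed.

Lemma half_pow_S n : (/2)^(S n) = /2 * (/2)^n.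
Proof. reflexivity. Qed.

Lemma half_pow_le1 n : (/2)^n <= 1.
Proof. induction n; simpl; [lra|]. pose proof (half_pow_pos n). lra. Qed.

Lemma half_pow_lt m n : (m < n)%nat -> (/2)^n < (/2)^m.
Proof.
  intro H; induction H.
  - rewrite half_pow_S. pose proof (half_pow_pos m); lra.
  - rewrite half_pow_S. pose proof (half_pow_pos m0); lra.
Qed.

Lemma half_pow_le m n : (m <= n)%nat -> (/2)^n <= (/2)^m.
Proof.
  intro H. destruct (Nat.eq_dec m n); [subst; lra|].
  left; apply half_pow_lt; lia.
Qed.

Lemma ln_half_pow n : ln ((/2)^n) = - INR n * ln 2.
Proof. rewrite ln_pow by lra. rewrite ln_Rinv by lra. ring. Qed.

Lemma ln2_pos : 0 < ln 2.
Proof. pose proof ln_lt_2; lra. Qed.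

Lemma blk_eq n t : 1 - (/2)^n <= t < 1 - (/2)^(n+1) -> blk t = n.
Proof.
  intros [H1 H2]. unfold blk.
  assert (Hp := half_pow_pos (n+1)).
  assert (A1 : ln (1 - t) <= ln ((/2)^n)) by (apply ln_le'; lra).
  assert (A2 : ln ((/2)^(n+1)) < ln (1 - t)) by (apply ln_increasing; lra).
  rewrite ln_half_pow in A1, A2. rewrite plus_INR in A2. simpl in A2.
  pose proof ln2_pos as L.
  set (r := - ln (1 - t) / ln 2).
  assert (R1 : INR n <= r).
  { unfold r. apply Rmult_le_reg_r with (ln 2); auto.
    unfold Rdiv; rewrite Rmult_assoc, Rinv_l by lra. lra. }
  assert (R2 : r < INR n + 1).
  { unfold r. apply Rmult_lt_reg_r with (ln 2); auto.
    unfold Rdiv; rewrite Rmult_assoc, Rinv_l by lra. lra. }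
  rewrite <- (Int_part_spec r (Z.of_nat n)).
  - apply Nat2Z.id.
  - rewrite <- INR_IZR_INZ. lra.
Qed.

Lemma blk_block t : 0 <= t < 1 -> 1 - (/2)^(blk t) <= t < 1 - (/2)^(blk t + 1).
Proof.
  intros [H0 H1].
  pose proof ln2_pos as L.
  set (r := - ln (1 - t) / ln 2).
  assert (Hr : 0 <= r).
  { unfold r. assert (ln (1 - t) <= 0). { rewrite <- ln_1. apply ln_le'; lra. }
    unfold Rdiv. apply Rmult_le_pos; [lra|]. left; apply Rinv_0_lt_compat; auto. }
  pose proof (base_Int_part r) as [B1 B2].
  assert (Hz : (0 <= Int_part r)%Z).
  { destruct (Z_le_gt_dec 0 (Int_part r)); auto.
    assert (Int_part r <= -1)%Z by lia. apply IZR_le in H. lra. }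
  assert (E : INR (blk t) = IZR (Int_part r)).
  { unfold blk. fold r. rewrite INR_IZR_INZ. rewrite Z2Nat.id; auto. }
  set (n := blk t) in *.
  assert (R1 : INR n <= r) by lra.
  assert (R2 : r < INR n + 1) by lra.
  assert (Ln1 : - INR n * ln 2 >= ln (1 - t)).
  { unfold r in R1. apply Rmult_le_compat_r with (r := ln 2) in R1; [|lra].
    unfold Rdiv in R1. rewrite Rmult_assoc, Rinv_l in R1 by lra. lra. }
  assert (Ln2 : ln (1 - t) > - (INR n + 1) * ln 2).
  { unfold r in R2. apply Rmult_lt_compat_r with (r := ln 2) in R2; [|lra].
    unfold Rdiv in R2. rewrite Rmult_assoc, Rinv_l in R2 by lra. lra. }
  assert (Hp := half_pow_pos n). assert (Hp' := half_pow_pos (n+1)).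
  split.
  - destruct (Rle_or_lt (1 - t) ((/2)^n)) as [h|h]; [lra|].
    exfalso. apply ln_increasing in h; auto. rewrite ln_half_pow in h. lra.
  - destruct (Rle_or_lt (1 - t) ((/2)^(n+1))) as [h|h]; [|lra].
    exfalso. apply ln_le' in h; [|lra]. rewrite ln_half_pow, plus_INR in h. simpl in h. lra.
Qed.

Definition phi (n : nat) (t : R) : R := 2 ^ (n + 1) * (t - (1 - (/ 2) ^ n)).

Lemma pow2_half n : 2 ^ n * (/2) ^ n = 1.
Proof. rewrite <- Rpow_mult_distr. replace (2 * /2) with 1 by field. apply pow1. Qed.

Lemma pow2_pos n : 0 < 2 ^ n.
Proof. apply pow_lt; lra. Qed.

Lemma pow2_half' n : 2 ^ (n+1) * (/2) ^ n = 2.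
Proof.
  rewrite pow_add. simpl. replace (2 ^ n * (2 * 1) * (/ 2) ^ n) with (2 * (2^n * (/2)^n)) by ring.
  rewrite pow2_half; ring.
Qed.

Lemma half_pow_Sn n : (/2)^(n+1) = /2 * (/2)^n.
Proof. rewrite Nat.add_comm. reflexivity. Qed.

Lemma phi_range n t : 1 - (/2)^n <= t <= 1 - (/2)^(n+1) -> 0 <= phi n t <= 1.
Proof.
  intros [H1 H2]. unfold phi. rewrite half_pow_Sn in H2.
  pose proof (pow2_half' n). pose proof (pow2_pos (n+1)). pose proof (half_pow_pos n).
  split.
  - apply Rmult_le_pos; lra.
  - apply Rle_trans with (2 ^ (n+1) * (/2 * (/2)^n)).
    + apply Rmult_le_compat_l; lra.
    + nra.
Qed.

Lemma phi_end n : phi n (1 - (/2)^(n+1)) = 1.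
Proof. unfold phi. rewrite half_pow_Sn. pose proof (pow2_half' n). nra. Qed.

Lemma phi_start n : phi n (1 - (/2)^n) = 0.
Proof. unfold phi. ring. Qed.

Lemma phi_diff n s t : phi n s - phi n t = 2 ^ (n+1) * (s - t).
Proof. unfold phi. ring. Qed.

Lemma cst_lt1 n : 1 - (/2)^n < 1.
Proof. pose proof (half_pow_pos n); lra. Qed.

Lemma cst_ge0 n : 0 <= 1 - (/2)^n.
Proof. pose proof (half_pow_le1 n); lra. Qed.

Lemma cst_mono n : 1 - (/2)^n < 1 - (/2)^(n+1).
Proof. rewrite half_pow_Sn. pose proof (half_pow_pos n). lra. Qed.

Lemma concat_closed {X : Type} (f : nat -> R -> X) (x : X) (a : cantor) n t :
  (forall n, f n 0 = x) -> (forall n, f n 1 = x) ->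
  1 - (/2)^n <= t <= 1 - (/2)^(n+1) ->
  concat f x a t = fpow f x n (a n) (phi n t).
Proof.
  intros H0 H1 [Ht1 [Ht2|Ht2]].
  - assert (Hb : blk t = n) by (apply blk_eq; lra).
    unfold concat. destruct (Rlt_dec t 1) as [h|h].
    + rewrite Hb. reflexivity.
    + exfalso. pose proof (cst_lt1 (n+1)). lra.
  - subst t. assert (Hb : blk (1 - (/2)^(n+1)) = (n+1)%nat).
    { apply blk_eq. split; [lra|]. apply cst_mono. }
    unfold concat. destruct (Rlt_dec _ 1) as [h|h].
    + rewrite Hb. rewrite phi_end. fold (phi (n+1) (1 - (/2)^(n+1))). rewrite phi_start.
      unfold fpow. destruct (a (n+1)%nat), (a n); rewrite ?H0, ?H1; reflexivity.
    + exfalso. pose proof (cst_lt1 (n+1)). lra.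
Qed.

Lemma metric_facts {X : Type} (d : X -> X -> R) : is_metric d ->
  (forall y, d y y = 0).
Proof. intros [_ [H _]] y. apply H. reflexivity. Qed.

Lemma fpow_cont {X : Type} (d : X -> X -> R) (f : nat -> R -> X) x n b :
  is_metric d -> (forall n, is_loop d (f n) x) -> cont_on_I d (fpow f x n b).
Proof.
  intros Hm Hl. unfold fpow. destruct b.
  - apply Hl.
  - intros t _ eps Heps. exists 1. split; [lra|]. intros. rewrite metric_facts; auto.
Qed.

Lemma fpow_diam {X : Type} (d : X -> X -> R) (f : nat -> R -> X) x n b :
  is_metric d ->
  (forall n s t, unit_int s -> unit_int t -> d (f n s) (f n t) <= (/ 2) ^ n) ->
  forall s t, unit_int s -> unit_int t -> d (fpow f x n b s) (fpow f x n b t) <= (/ 2) ^ n.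
Proof.
  intros Hm Hd s t Hs Ht. unfold fpow. destruct b; auto.
  rewrite metric_facts; auto. left; apply half_pow_pos.
Qed.

Lemma piece {X : Type} (d : X -> X -> R) (f : nat -> R -> X) x a n t :
  is_metric d -> (forall n, is_loop d (f n) x) ->
  1 - (/2)^n <= t <= 1 - (/2)^(n+1) ->
  forall eps, eps > 0 -> exists delta, delta > 0 /\
    forall s, 1 - (/2)^n <= s <= 1 - (/2)^(n+1) -> Rabs (s - t) < delta ->
      d (concat f x a s) (concat f x a t) < eps.
Proof.
  intros Hm Hl Ht eps Heps.
  assert (H0 : forall n, f n 0 = x) by (intro k; apply (Hl k)).
  assert (H1 : forall n, f n 1 = x) by (intro k; apply (Hl k)).
  destruct (fpow_cont d f x n (a n) Hm Hl (phi n t) (phi_range n t Ht) eps Heps)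
    as [d0 [Hd0 Hc]].
  exists (d0 / 2 ^ (n+1)). split.
  - apply Rdiv_lt_0_compat; auto. apply pow2_pos.
  - intros s Hs Hst. rewrite !(concat_closed f x a n) by auto.
    apply Hc. apply phi_range; auto.
    rewrite phi_diff, Rabs_mult, Rabs_right by (left; apply pow2_pos).
    pose proof (pow2_pos (n+1)).
    apply Rmult_lt_compat_l with (r := 2 ^ (n+1)) in Hst; auto.
    unfold Rdiv in Hst. rewrite <- Rmult_assoc, (Rmult_comm _ d0), Rmult_assoc, Rinv_r in Hst by lra.
    lra.
Qed.

Lemma half_pow_small eps : eps > 0 -> exists N, (/2)^N < eps.
Proof.
  intro He. destruct (pow_lt_1_zero (/2)) with (y := eps) as [N HN]; auto.
  - rewrite Rabs_right; lra.
  - exists N. specialize (HN N (le_n N)). rewrite Rabs_right in HN; auto.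
    left; apply half_pow_pos.
Qed.

Lemma blk_ge n s : 0 <= s < 1 -> 1 - (/2)^n <= s -> (n <= blk s)%nat.
Proof.
  intros Hs Hn. pose proof (blk_block s Hs) as [B1 B2].
  destruct (le_lt_dec n (blk s)) as [h|h]; auto.
  exfalso. assert (blk s + 1 <= n)%nat by lia.
  pose proof (half_pow_le _ _ H). lra.
Qed.

Lemma blk_lt n s : 0 <= s -> s < 1 - (/2)^n -> (blk s < n)%nat.
Proof.
  intros Hs Hn. assert (s < 1) by (pose proof (half_pow_pos n); lra).
  pose proof (blk_block s (conj Hs H)) as [B1 B2].
  destruct (le_lt_dec n (blk s)) as [h|h]; auto.
  exfalso. pose proof (half_pow_le _ _ h). lra.
Qed.

Lemma concat_cont {X : Type} (d : X -> X -> R) (f : nat -> R -> X) x a :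
  is_metric d -> (forall n, is_loop d (f n) x) ->
  (forall n s t, unit_int s -> unit_int t -> d (f n s) (f n t) <= (/ 2) ^ n) ->
  cont_on_I d (concat f x a).
Proof.
  intros Hm Hl Hdiam t Ht eps Heps.
  assert (H0 : forall n, f n 0 = x) by (intro k; apply (Hl k)).
  assert (H1 : forall n, f n 1 = x) by (intro k; apply (Hl k)).
  destruct Hm as [Mpos [Meq [Msym Mtri]]].
  assert (Mrefl : forall y, d y y = 0) by (intro; apply Meq; auto).
  destruct (Req_dec t 1) as [Et|Et].
  - subst t. destruct (half_pow_small eps Heps) as [N HN].
    exists ((/2)^N). split; [apply half_pow_pos|].
    intros s Hs Hst.
    assert (C1 : concat f x a 1 = x).
    { unfold concat. destruct (Rlt_dec 1 1); [lra|auto]. }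
    rewrite C1. destruct (Req_dec s 1) as [Es|Es].
    + subst s. rewrite C1, Mrefl. lra.
    + destruct Hs as [Hs0 Hs1]. assert (Hs2 : s < 1) by lra.
      rewrite Rabs_left in Hst by lra.
      set (m := blk s).
      assert (Hmn : (N <= m)%nat) by (apply blk_ge; lra).
      pose proof (blk_block s (conj Hs0 Hs2)) as B. fold m in B.
      rewrite (concat_closed f x a m s H0 H1) by lra.
      assert (Hx : x = fpow f x m (a m) 0).
      { unfold fpow; destruct (a m); auto. }
      rewrite Hx at 2.
      eapply Rle_lt_trans; [apply (fpow_diam d f x m (a m))|].
      * exact (conj Mpos (conj Meq (conj Msym Mtri))).
      * exact Hdiam.
      * apply phi_range; lra.
      * split; lra.
      * eapply Rle_lt_trans; [apply half_pow_le; exact Hmn|exact HN].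
  - destruct Ht as [Ht0 Ht1]. assert (Ht2 : t < 1) by lra.
    set (n := blk t).
    pose proof (blk_block t (conj Ht0 Ht2)) as B. fold n in B.
    assert (Heps2 : eps / 2 > 0) by lra.
    destruct (piece d f x a n t (conj Mpos (conj Meq (conj Msym Mtri))) Hl ltac:(lra) (eps/2) Heps2)
      as [d1 [Hd1 P1]].
    assert (Hd2 : exists d2, d2 > 0 /\ forall m, n = S m ->
       forall s, 1 - (/2)^m <= s <= 1 - (/2)^(m+1) -> Rabs (s - (1 - (/2)^n)) < d2 ->
         d (concat f x a s) (concat f x a (1 - (/2)^n)) < eps/2).
    { destruct n as [|m].
      - exists 1. split; [lra|]. intros; discriminate.
      - assert (Hc : 1 - (/2)^m <= 1 - (/2)^(S m) <= 1 - (/2)^(m+1)).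
        { rewrite Nat.add_1_r. split; [|lra]. left. rewrite <- Nat.add_1_r. apply cst_mono. }
        destruct (piece d f x a m (1 - (/2)^(S m)) (conj Mpos (conj Meq (conj Msym Mtri))) Hl Hc (eps/2) Heps2)
          as [d2 [Hd2 P2]].
        exists d2. split; auto. intros m' Em s Hs Hst. injection Em as <-. apply P2; auto. }
    destruct Hd2 as [d2 [Hd2 P2]].
    pose proof (half_pow_pos n) as Hpn.
    set (delta := Rmin d1 (Rmin d2 (Rmin ((1 - (/2)^(n+1)) - t) ((/2)^(n+1))))).
    assert (Hdp : delta > 0).
    { unfold delta. repeat apply Rmin_pos; try lra. apply half_pow_pos. }
    exists delta. split; auto.
    assert (D1 : delta <= d1) by apply Rmin_l.
    assert (D2 : delta <= d2) by (unfold delta; eapply Rle_trans; [apply Rmin_r|apply Rmin_l]).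
    assert (D3 : delta <= (1 - (/2)^(n+1)) - t)
      by (unfold delta; eapply Rle_trans; [apply Rmin_r|]; eapply Rle_trans; [apply Rmin_r|apply Rmin_l]).
    assert (D4 : delta <= (/2)^(n+1))
      by (unfold delta; eapply Rle_trans; [apply Rmin_r|]; eapply Rle_trans; [apply Rmin_r|apply Rmin_r]).
    intros s Hs Hst.
    pose proof (Rabs_def2 _ _ Hst) as [A1 A2].
    destruct (Rle_or_lt (1 - (/2)^n) s) as [Hsn|Hsn].
    + assert (Hs2 : s <= 1 - (/2)^(n+1)) by lra. assert (Hs3 : Rabs (s - t) < d1) by lra. assert (E := P1 s (conj Hsn Hs2) Hs3). lra.
    + destruct n as [|m] eqn:En.
      * simpl in Hsn. destruct Hs; lra.
      * assert (Q1 : (/2)^(S m) = /2 * (/2)^m) by reflexivity.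
        assert (Q2 : (/2)^(S m + 1) = /2 * (/2)^(S m)) by apply half_pow_Sn.
        assert (Q3 : (/2)^(m + 1) = /2 * (/2)^m) by apply half_pow_Sn.
        pose proof (half_pow_pos m).
        set (c := 1 - (/ 2) ^ (S m)).
        assert (Hc1 : 1 - (/2)^m <= s) by (unfold c in *; lra).
        assert (Hc2 : s <= 1 - (/2)^(m+1)) by (unfold c in *; lra).
        assert (Hcs : Rabs (s - c) < d2) by (rewrite Rabs_left; unfold c in *; lra).
        assert (E2 := P2 m eq_refl s (conj Hc1 Hc2) Hcs).
        assert (Hct : Rabs (c - t) < d1).
        { unfold c in *. rewrite Rabs_left1; lra. }
        assert (Hc3 : 1 - (/2)^(S m) <= c <= 1 - (/2)^(S m + 1)) by (unfold c in *; lra).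
        assert (E1 := P1 c Hc3 Hct).
        specialize (Mtri (concat f x a s) (concat f x a c) (concat f x a t)). unfold c in *. lra.
Qed.


Definition seg {X : Type} (g : R -> X) (a b : R) : R -> X := fun u => g (a + (b - a) * u).
Definition tri {X : Type} (g : R -> X) (v0 v1 v2 : R) : R -> R -> X :=
  fun s t => g (v0 + (v1 - v0) * s + (v2 - v0) * t).

Lemma tri_cont {X : Type} (d : X -> X -> R) g v0 v1 v2 :
  cont_on_I d g -> unit_int v0 -> unit_int v1 -> unit_int v2 ->
  cont_on_simplex2 d (tri g v0 v1 v2).
Proof.
  intros Hg H0 H1 H2 s t Hst eps Heps.
  destruct Hst as [Hs [Ht Hst]]. unfold unit_int in *.
  set (w := v0 + (v1 - v0) * s + (v2 - v0) * t).
  assert (Hw : unit_int w).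
  { unfold w, unit_int. replace (v0 + (v1 - v0) * s + (v2 - v0) * t)
      with (v0 * (1 - s - t) + v1 * s + v2 * t) by ring. split; nra. }
  destruct (Hg w Hw eps Heps) as [d0 [Hd0 Hc]].
  set (M := Rabs (v1 - v0) + Rabs (v2 - v0) + 1).
  assert (HM : 0 < M) by (unfold M; pose proof (Rabs_pos (v1 - v0)); pose proof (Rabs_pos (v2 - v0)); lra).
  exists (d0 / M). split; [apply Rdiv_lt_0_compat; auto|].
  intros s' t' Hst' Hd. destruct Hst' as [Hs' [Ht' Hst']].
  unfold tri. fold w. apply Hc.
  - unfold unit_int. replace (v0 + (v1 - v0) * s' + (v2 - v0) * t')
      with (v0 * (1 - s' - t') + v1 * s' + v2 * t') by ring. split; nra.
  - replace (v0 + (v1 - v0) * s' + (v2 - v0) * t' - w)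
      with ((v1 - v0) * (s' - s) + (v2 - v0) * (t' - t)) by (unfold w; ring).
    eapply Rle_lt_trans; [apply Rabs_triang|]. rewrite !Rabs_mult.
    assert (Hm : (Rabs (s' - s) + Rabs (t' - t)) * M < d0).
    { apply Rmult_lt_compat_r with (r := M) in Hd; auto.
      unfold Rdiv in Hd. rewrite Rmult_assoc, Rinv_l in Hd by lra. lra. }
    pose proof (Rabs_pos (v1 - v0)). pose proof (Rabs_pos (v2 - v0)).
    pose proof (Rabs_pos (s' - s)). pose proof (Rabs_pos (t' - t)).
    unfold M in Hm. nra.
Qed.

Lemma cf_bd2_tri {X : Type} (g : R -> X) v0 v1 v2 k p :
  cf (bd2 ((k, tri g v0 v1 v2) :: nil)) p =
  (k * ind (seg g v1 v2) p - k * ind (seg g v0 v2) p + k * ind (seg g v0 v1) p)%Z.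
Proof.
  rewrite bd2_cons. cbn [cf bd2 flat_map].
  rewrite (ind_same_l (face0 _) (seg g v1 v2)).
  2:{ intros u _. unfold face0, tri, seg. f_equal. ring. }
  rewrite (ind_same_l (face1 _) (seg g v0 v2)).
  2:{ intros u _. unfold face1, tri, seg. f_equal. ring. }
  rewrite (ind_same_l (face2 _) (seg g v0 v1)).
  2:{ intros u _. unfold face2, tri, seg. f_equal. ring. }
  simpl. lia.
Qed.

Lemma cf_bd2_const {X : Type} (y : X) k p :
  cf (bd2 ((k, fun _ _ : R => y) :: nil)) p = (k * ind (fun _ : R => y) p)%Z.
Proof.
  rewrite bd2_cons. cbn [cf bd2 flat_map]. unfold face0, face1, face2. simpl. lia.
Qed.

Lemma const_cont2 {X : Type} (d : X -> X -> R) (y : X) :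
  is_metric d -> cont_on_simplex2 d (fun _ _ : R => y).
Proof.
  intros Hm s t _ eps He. exists 1. split; [lra|]. intros.
  rewrite metric_facts; auto.
Qed.

Lemma single_diff {X : Type} (d : X -> X -> R) (x : X) (f : nat -> R -> X) a b k :
  is_metric d ->
  (forall n, is_loop d (f n) x) ->
  (forall n s t, unit_int s -> unit_int t -> d (f n s) (f n t) <= (/ 2) ^ n) ->
  a k = true -> b k = false -> (forall j, j <> k -> a j = b j) ->
  homologous d (concat f x a) (concat f x b) -> nulhomologous d (f k).
Proof.
  intros Hm Hl Hdiam Hak Hbk Hab Hh.
  assert (H0 : forall n, f n 0 = x) by (intro n; apply (Hl n)).
  assert (H1 : forall n, f n 1 = x) by (intro n; apply (Hl n)).
  apply homologous_cf in Hh. destruct Hh as [C0 [HC0 Hh]].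
  set (ga := concat f x a). set (gb := concat f x b).
  set (c := 1 - (/2)^k). set (e := 1 - (/2)^(k+1)).
  assert (Hc : unit_int c) by (unfold c, unit_int; pose proof (cst_ge0 k); pose proof (cst_lt1 k); lra).
  assert (He : unit_int e) by (unfold e, unit_int; pose proof (cst_ge0 (k+1)); pose proof (cst_lt1 (k+1)); lra).
  assert (Hce : c < e) by apply cst_mono.
  assert (U0 : unit_int 0) by (unfold unit_int; lra).
  assert (U1 : unit_int 1) by (unfold unit_int; lra).
  assert (Ca : cont_on_I d ga) by (apply concat_cont; auto).
  assert (Cb : cont_on_I d gb) by (apply concat_cont; auto).
  assert (Hec : e - c = (/2)^(k+1)) by (unfold e, c; rewrite half_pow_Sn; field).
  assert (F1 : same_simplex1 (seg ga c e) (f k)).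
  { intros u Hu. unfold seg, ga. rewrite (concat_closed f x a k) by (auto; unfold c, e in *; destruct Hu; rewrite Hec; pose proof (half_pow_pos (k+1)); split; nra).
    rewrite Hak. simpl. f_equal. unfold phi. rewrite Hec. fold c.
    replace (2 ^ (k + 1) * (c + (/ 2) ^ (k + 1) * u - c)) with ((2 ^ (k+1) * (/2)^(k+1)) * u) by ring.
    rewrite pow2_half. ring. }
  assert (F2 : same_simplex1 (seg gb c e) (fun _ => x)).
  { intros u Hu. unfold seg, gb. rewrite (concat_closed f x b k) by (auto; unfold c, e in *; destruct Hu; rewrite Hec; pose proof (half_pow_pos (k+1)); split; nra).
    rewrite Hbk. reflexivity. }
  assert (F3 : same_simplex1 (seg ga 0 c) (seg gb 0 c)).
  { intros u Hu. unfold seg. destruct Hu as [Hu0 Hu1].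
    assert (Hc0 : 0 <= c) by apply Hc.
    destruct (Rlt_or_le ((0 + (c - 0) * u)) c) as [h|h].
    - assert (Hlt : (blk (0 + (c - 0) * u) < k)%nat) by (apply blk_lt; [nra|exact h]).
      unfold ga, gb, concat. destruct (Rlt_dec _ 1); auto.
      rewrite Hab by lia. reflexivity.
    - assert (Heq : 0 + (c - 0) * u = c) by nra. rewrite Heq.
      assert (Iv : 1 - (/2)^k <= c <= 1 - (/2)^(k+1)) by (unfold c; split; [lra|left; apply cst_mono]).
      unfold ga, gb. rewrite (concat_closed f x a k), (concat_closed f x b k) by auto.
      fold c. unfold c. rewrite phi_start. unfold fpow. destruct (a k), (b k); rewrite ?H0; reflexivity. }
  assert (F4 : same_simplex1 (seg ga e 1) (seg gb e 1)).
  { intros u Hu. unfold seg. destruct Hu as [Hu0 Hu1].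
    set (t := e + (1 - e) * u).
    assert (Ht : e <= t <= 1) by (unfold t; destruct He; nra).
    unfold ga, gb, concat. destruct (Rlt_dec t 1) as [h|h]; auto.
    assert (Hge : (k + 1 <= blk t)%nat) by (apply blk_ge; [destruct Hc; lra|unfold e in Ht; lra]).
    rewrite Hab by lia. reflexivity. }
  assert (F5a : same_simplex1 (seg ga 0 1) ga) by (intros u _; unfold seg; f_equal; ring).
  assert (F5b : same_simplex1 (seg gb 0 1) gb) by (intros u _; unfold seg; f_equal; ring).
  apply nulhomologous_cf.
  exists ((1%Z, tri ga 0 c 1) :: (1%Z, tri ga c e 1) :: ((-1)%Z, tri gb 0 c 1)
          :: ((-1)%Z, tri gb c e 1) :: (1%Z, fun _ _ : R => x) :: C0).
  split.
  - intros el Hel. simpl in Hel.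
    destruct Hel as [<-|[<-|[<-|[<-|[<-|Hel]]]]]; simpl; try (apply tri_cont; auto; fail).
    + apply const_cont2; auto.
    + apply HC0; auto.
  - intro p.
    change ((1%Z, tri ga 0 c 1) :: (1%Z, tri ga c e 1) :: ((-1)%Z, tri gb 0 c 1)
          :: ((-1)%Z, tri gb c e 1) :: (1%Z, fun _ _ : R => x) :: C0)
      with (((1%Z, tri ga 0 c 1) :: nil) ++ ((1%Z, tri ga c e 1) :: nil) ++ (((-1)%Z, tri gb 0 c 1) :: nil)
          ++ (((-1)%Z, tri gb c e 1) :: nil) ++ ((1%Z, fun _ _ : R => x) :: nil) ++ C0).
    rewrite !bd2_app, !cf_app, !cf_bd2_tri, cf_bd2_const.
    rewrite (ind_same_l _ _ p F5a), (ind_same_l _ _ p F5b), (ind_same_l _ _ p F1), (ind_same_l _ _ p F2),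
      (ind_same_l _ _ p F3), (ind_same_l _ _ p F4).
    specialize (Hh p). fold ga gb in Hh. lia.
Qed.

Lemma single_diff_main {X : Type} (d : X -> X -> R) (x : X) (f : nat -> R -> X) :
  is_metric d ->
  (forall n, is_loop d (f n) x) ->
  (forall n s t, unit_int s -> unit_int t -> d (f n s) (f n t) <= (/ 2) ^ n) ->
  (forall n, ~ nulhomologous d (f n)) ->
  forall a b : cantor, differ_exactly_once a b -> ~ sim_rel d f x a b.
Proof.
  intros Hm Hl Hdiam Hnul a b [k [Hk Hj]] Hs.
  apply (Hnul k).
  destruct (a k) eqn:Ea, (b k) eqn:Eb; try congruence.
  - eapply (single_diff d x f a b k); eauto.
  - pose proof (sim_equiv d f x) as [_ [Hsym _]].
    apply Hsym in Hs.
    apply (single_diff d x f b a k); auto.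
    intros j Hjk; symmetry; auto.
Qed.


Lemma ball_open {X : Type} (d : X -> X -> R) y r : is_metric d -> is_open d (fun w => d y w < r).
Proof.
  intros [Mp [Me [Ms Mt]]] w Hw. exists (r - d y w). split; [lra|].
  intros z Hz. specialize (Mt y w z). lra.
Qed.

Lemma list_max_nat {X : Type} (l : list X) (N : X -> nat) : exists M, forall y, In y l -> (N y <= M)%nat.
Proof.
  induction l as [|a l [M HM]].
  - exists 0%nat. intros y [].
  - exists (Nat.max (N a) M). intros y [<-|Hy]; [lia|]. specialize (HM y Hy). lia.
Qed.

Lemma compact_complete {X : Type} (d : X -> X -> R) :
  is_metric d -> compact_space d -> complete_metric d.
Proof.
  intros Hm Hc u Hu.
  destruct Hm as [Mp [Me [Ms Mt]]].
  apply NNPP. intro Hno.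
  assert (Hy : forall y, exists eps, eps > 0 /\ exists N, forall m, (m >= N)%nat -> d (u m) y > eps / 2).
  { intro y. apply NNPP. intro Hn. apply Hno. exists y. intros eps Heps.
    apply NNPP. intro Hn2. apply Hn. exists eps. split; auto.
    destruct (Hu (eps/2) ltac:(lra)) as [N HN]. exists N. intros m Hm.
    apply NNPP. intro Hm2. apply Hn2. exists N. intros n Hn'.
    specialize (HN n m Hn' Hm). specialize (Mt (u n) (u m) y). lra. }
  set (E := fun y => proj1_sig (constructive_indefinite_description _ (Hy y))).
  assert (HE : forall y, E y > 0 /\ exists N, forall m, (m >= N)%nat -> d (u m) y > E y / 2).
  { intro y. unfold E. destruct (constructive_indefinite_description _ (Hy y)); simpl; auto. }
  set (NN := fun y => proj1_sig (constructive_indefinite_description _ (proj2 (HE y)))).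
  assert (HN : forall y m, (m >= NN y)%nat -> d (u m) y > E y / 2).
  { intro y. unfold NN. destruct (constructive_indefinite_description _ (proj2 (HE y))); simpl; auto. }
  destruct (Hc X (fun y w => d y w < E y / 2)) as [l Hl].
  - intro y. apply ball_open. exact (conj Mp (conj Me (conj Ms Mt))).
  - intro y. exists y. assert (d y y = 0) by (apply Me; auto). pose proof (proj1 (HE y)). lra.
  - destruct (list_max_nat l NN) as [M HM].
    destruct (Hl (u M)) as [y [Hy1 Hy2]].
    specialize (HN y M (HM y Hy1)). rewrite Ms in HN. lra.
Qed.

Lemma compact_dense {X : Type} (d : X -> X -> R) (x0 : X) :
  is_metric d -> compact_space d ->
  exists dx : nat -> X, forall y eps, eps > 0 -> exists n, d y (dx n) < eps.
Proof.
  intros Hm Hc.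
  assert (Hl : forall m : nat, exists l : list X, forall y, exists z, In z l /\ d z y < / (INR m + 1)).
  { intro m. destruct (Hc X (fun z w => d z w < / (INR m + 1))) as [l Hl].
    - intro z. apply ball_open; auto.
    - intro y. exists y. destruct Hm as [_ [Me _]]. assert (d y y = 0) by (apply Me; auto).
      rewrite H. apply Rinv_0_lt_compat. pose proof (pos_INR m); lra.
    - exists l. exact Hl. }
  set (L := fun m => proj1_sig (constructive_indefinite_description _ (Hl m))).
  assert (HL : forall m y, exists z, In z (L m) /\ d z y < / (INR m + 1)).
  { intro m. unfold L. destruct (constructive_indefinite_description _ (Hl m)); simpl; auto. }
  exists (fun n => let '(m, i) := Cantor.of_nat n in nth i (L m) x0).
  intros y eps Heps.
  destruct (archimed (/ eps)) as [A _].
  assert (Hz : (0 <= up (/ eps))%Z).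
  { apply le_IZR. pose proof (Rinv_0_lt_compat eps Heps). simpl. lra. }
  set (m := Z.to_nat (up (/ eps))).
  assert (Hm' : / (INR m + 1) < eps).
  { unfold m. rewrite INR_IZR_INZ, Z2Nat.id by auto.
    pose proof (Rinv_0_lt_compat eps Heps).
    apply Rlt_le_trans with (/ / eps); [|rewrite Rinv_inv; lra].
    apply Rinv_lt_contravar; [|lra].
    apply Rmult_lt_0_compat; auto. lra. }
  destruct (HL m y) as [z [Hz1 Hz2]].
  destruct (In_nth _ _ x0 Hz1) as [i [_ Hi]].
  exists (Cantor.to_nat (m, i)). rewrite Cantor.cancel_of_to. rewrite Hi.
  destruct Hm as [_ [_ [Ms _]]]. rewrite Ms. lra.
Qed.


Definition term {Y : Type} (rho : Y -> Y -> R) (z z' : nat -> Y) (n : nat) : R :=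
  (/2)^n * rho (z n) (z' n).

Definition dS {Y : Type} (rho : Y -> Y -> R) (z z' : nat -> Y) : R :=
  Series (term rho z z').

Definition bmetric {Y : Type} (rho : Y -> Y -> R) : Prop :=
  is_metric rho /\ forall y y', rho y y' <= 1.

Lemma term_bounds {Y : Type} (rho : Y -> Y -> R) z z' n :
  bmetric rho -> 0 <= term rho z z' n <= (/2)^n.
Proof.
  intros [[Mp _] Mb]. unfold term. pose proof (half_pow_pos n).
  specialize (Mp (z n) (z' n)). specialize (Mb (z n) (z' n)). split; nra.
Qed.

Lemma ex_geom_half : ex_series (fun n => (/2)^n).
Proof. apply ex_series_geom. rewrite Rabs_right; lra. Qed.

Lemma ex_term {Y : Type} (rho : Y -> Y -> R) z z' : bmetric rho -> ex_series (term rho z z').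
Proof.
  intro Hb. apply (@ex_series_le R_AbsRing R_CompleteNormedModule _ (fun n => (/2)^n)); [|apply ex_geom_half].
  intro n. pose proof (term_bounds rho z z' n Hb). change norm with Rabs. simpl.
  rewrite Rabs_right; lra.
Qed.

Lemma Series_zero : Series (fun _ => 0) = 0.
Proof.
  rewrite (Series_ext _ (fun n => 0 * (/2)^n)) by (intro; ring).
  rewrite Series_scal_l. ring.
Qed.

Lemma Series_nonneg (a : nat -> R) : (forall n, 0 <= a n) -> ex_series a -> 0 <= Series a.
Proof.
  intros H Ha. rewrite <- Series_zero. apply Series_le; auto. intro n; split; [lra|auto].
Qed.

Lemma Series_split (a : nat -> R) L : ex_series a ->
  Series a = sum_f_R0 a L + Series (fun k => a (S L + k)%nat).
Proof. intro H. rewrite (Series_incr_n a (S L)); auto; lia. Qed.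

Lemma ex_series_shift (a : nat -> R) L : ex_series a -> ex_series (fun k => a (L + k)%nat).
Proof.
  intro H. induction L.
  - apply (ex_series_ext a); auto.
  - apply ex_series_incr_1 in IHL. apply (ex_series_ext _ _ (fun n => f_equal a (eq_sym (Nat.add_succ_comm L n))) IHL).
Qed.

Lemma geom_tail L : Series (fun k => (/2)^(S L + k)) = 2 * (/2)^(S L).
Proof.
  rewrite (Series_ext _ (fun k => (/2)^(S L) * (/2)^k)) by (intro; apply pow_add).
  rewrite Series_scal_l, Series_geom by (rewrite Rabs_right; lra). field.
Qed.

Lemma dS_upper {Y : Type} (rho : Y -> Y -> R) z z' L : bmetric rho ->
  dS rho z z' <= sum_f_R0 (term rho z z') L + 2 * (/2)^(S L).
Proof.
  intro Hb. unfold dS. rewrite (Series_split _ L) by (apply ex_term; auto).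
  apply Rplus_le_compat_l. rewrite <- geom_tail.
  apply Series_le.
  - intro n. apply term_bounds; auto.
  - apply ex_series_shift, ex_geom_half.
Qed.

Lemma term_le_dS {Y : Type} (rho : Y -> Y -> R) z z' n : bmetric rho ->
  term rho z z' n <= dS rho z z'.
Proof.
  intro Hb. unfold dS. rewrite (Series_split _ n) by (apply ex_term; auto).
  assert (0 <= Series (fun k => term rho z z' (S n + k)%nat)).
  { apply Series_nonneg. intro; apply term_bounds; auto. apply ex_series_shift, ex_term; auto. }
  assert (term rho z z' n <= sum_f_R0 (term rho z z') n).
  { destruct n; simpl; [lra|]. pose proof (cond_pos_sum (term rho z z') n (fun k => proj1 (term_bounds rho z z' k Hb))). lra. }
  lra.
Qed.

Lemma dS_metric {Y : Type} (rho : Y -> Y -> R) : bmetric rho -> is_metric (dS rho).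
Proof.
  intros Hb. pose proof Hb as [[Mp [Me [Ms Mt]]] Mb].
  split; [|split; [|split]].
  - intros z z'. apply Series_nonneg; [intro; apply term_bounds; auto|apply ex_term; auto].
  - intros z z'. split.
    + intro H. apply functional_extensionality. intro n.
      pose proof (term_le_dS rho z z' n Hb). rewrite H in H0.
      pose proof (term_bounds rho z z' n Hb). unfold term in *.
      pose proof (half_pow_pos n).
      apply Me. assert (rho (z n) (z' n) * (/2)^n = 0) by nra.
      apply Rmult_integral in H3. destruct H3; lra.
    + intros <-. unfold dS. rewrite <- Series_zero. apply Series_ext. intro n.
      unfold term. assert (rho (z n) (z n) = 0) by (apply Me; auto). rewrite H; ring.
  - intros z z'. unfold dS. apply Series_ext. intro n. unfold term. rewrite Ms; auto.
  - intros z1 z2 z3. unfold dS. rewrite <- Series_plus by (apply ex_term; auto).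
    apply Series_le.
    + intro n. split; [apply term_bounds; auto|]. unfold term.
      pose proof (half_pow_pos n). specialize (Mt (z1 n) (z2 n) (z3 n)). nra.
    + apply (ex_series_plus (term rho z1 z2) (term rho z2 z3)); apply ex_term; auto.
Qed.

Lemma fin_max (L : nat) (P : nat -> nat -> Prop) :
  (forall n, (n <= L)%nat -> exists K, forall m, (m >= K)%nat -> P n m) ->
  exists K, forall n, (n <= L)%nat -> forall m, (m >= K)%nat -> P n m.
Proof.
  induction L; intro H.
  - destruct (H 0%nat (le_n 0)) as [K HK]. exists K. intros n Hn m Hm.
    assert (n = 0%nat) by lia. subst. auto.
  - destruct IHL as [K1 HK1]. { intros n Hn. apply H. lia. }
    destruct (H (S L) (le_n _)) as [K2 HK2].
    exists (Nat.max K1 K2). intros n Hn m Hm.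
    destruct (Nat.eq_dec n (S L)) as [->|h].
    + apply HK2. lia.
    + apply HK1; lia.
Qed.

Lemma term_le_rho {Y : Type} (rho : Y -> Y -> R) z z' n : bmetric rho ->
  term rho z z' n <= rho (z n) (z' n).
Proof.
  intros [[Mp _] _]. unfold term. pose proof (half_pow_le1 n). pose proof (half_pow_pos n).
  specialize (Mp (z n) (z' n)). nra.
Qed.

Lemma sum_small (a : nat -> R) L e : (forall n, (n <= L)%nat -> a n <= e) ->
  sum_f_R0 a L <= INR (S L) * e.
Proof.
  intro H. eapply Rle_trans; [apply (sum_Rle a (fun _ => e)); auto|].
  rewrite sum_cte. lra.
Qed.

Lemma dS_complete {Y : Type} (rho : Y -> Y -> R) :
  bmetric rho -> complete_metric rho -> complete_metric (dS rho).
Proof.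
  intros Hb Hc u Hu.
  assert (Hcoord : forall n, exists w, forall eps, eps > 0 -> exists N, forall m, (m >= N)%nat -> rho (u m n) w < eps).
  { intro n. apply Hc. intros eps Heps.
    destruct (Hu (eps * (/2)^n)) as [N HN].
    { pose proof (half_pow_pos n). nra. }
    exists N. intros m m' Hm Hm'. specialize (HN m m' Hm Hm').
    pose proof (term_le_dS rho (u m) (u m') n Hb). unfold term in H.
    pose proof (half_pow_pos n). nra. }
  set (w := fun n => proj1_sig (constructive_indefinite_description _ (Hcoord n))).
  assert (Hw : forall n eps, eps > 0 -> exists N, forall m, (m >= N)%nat -> rho (u m n) (w n) < eps).
  { intro n. unfold w. destruct (constructive_indefinite_description _ (Hcoord n)); simpl; auto. }
  exists w. intros eps Heps.
  destruct (half_pow_small (eps/4)) as [L HL]; [lra|].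
  assert (HL' : 2 * (/2)^(S L) < eps / 2).
  { rewrite half_pow_S. pose proof (half_pow_le L (S L)). lra. }
  set (e := eps / (2 * INR (S L))).
  assert (He : e > 0).
  { unfold e. apply Rdiv_lt_0_compat; [lra|]. pose proof (lt_0_INR (S L) (Nat.lt_0_succ L)). lra. }
  destruct (fin_max L (fun n m => rho (u m n) (w n) < e)) as [K HK].
  { intros n _. apply Hw; auto. }
  exists K. intros m Hm.
  eapply Rle_lt_trans; [apply (dS_upper rho _ _ L Hb)|].
  assert (sum_f_R0 (term rho (u m) w) L <= INR (S L) * e).
  { apply sum_small. intros n Hn. eapply Rle_trans; [apply term_le_rho; auto|].
    left. apply HK; auto. }
  assert (INR (S L) * e = eps / 2).
  { unfold e. field. pose proof (lt_0_INR (S L) (Nat.lt_0_succ L)). lra. }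
  lra.
Qed.

Fixpoint dec_list (L c : nat) : list nat :=
  match L with
  | O => nil
  | S L' => let '(a, c') := Cantor.of_nat c in a :: dec_list L' c'
  end.

Fixpoint enc_list (l : list nat) : nat :=
  match l with
  | nil => 0%nat
  | a :: l' => Cantor.to_nat (a, enc_list l')
  end.

Lemma dec_enc l : dec_list (length l) (enc_list l) = l.
Proof. induction l; [reflexivity|]. cbn [dec_list enc_list length]. rewrite Cantor.cancel_of_to. rewrite IHl; auto. Qed.

Lemma dS_separable {Y : Type} (rho : Y -> Y -> R) (dy : nat -> Y) :
  bmetric rho -> (forall y eps, eps > 0 -> exists n, rho y (dy n) < eps) ->
  separable_metric (dS rho).
Proof.
  intros Hb Hd.
  exists (fun code => let '(L, c) := Cantor.of_nat code in
                     Some (fun n => dy (nth n (dec_list L c) 0%nat))).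
  intros z eps Heps.
  destruct (half_pow_small (eps/4)) as [L HL]; [lra|].
  assert (HL' : 2 * (/2)^(S L) < eps / 2).
  { rewrite half_pow_S. pose proof (half_pow_le L (S L)). lra. }
  set (e := eps / (2 * INR (S L))).
  assert (He : e > 0).
  { unfold e. apply Rdiv_lt_0_compat; [lra|]. pose proof (lt_0_INR (S L) (Nat.lt_0_succ L)). lra. }
  assert (Hg : forall n, exists k, rho (z n) (dy k) < e) by (intro n; apply Hd; auto).
  set (g := fun n => proj1_sig (constructive_indefinite_description _ (Hg n))).
  assert (Hg' : forall n, rho (z n) (dy (g n)) < e).
  { intro n. unfold g. destruct (constructive_indefinite_description _ (Hg n)); simpl; auto. }
  set (lst := map g (seq 0 (S L))).
  exists (Cantor.to_nat (S L, enc_list lst)).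
  eexists. rewrite Cantor.cancel_of_to.
  assert (Hlen : length lst = S L) by (unfold lst; rewrite length_map, length_seq; auto).
  rewrite <- Hlen, dec_enc. split; [reflexivity|].
  eapply Rle_lt_trans; [apply (dS_upper rho _ _ L Hb)|].
  assert (sum_f_R0 (term rho z (fun n => dy (nth n lst 0%nat))) L <= INR (S L) * e).
  { apply sum_small. intros n Hn. eapply Rle_trans; [apply term_le_rho; auto|].
    unfold lst. rewrite (nth_indep _ _ (g 0%nat)) by (rewrite length_map, length_seq; lia).
    rewrite map_nth, seq_nth by lia. simpl. left; apply Hg'. }
  assert (INR (S L) * e = eps / 2).
  { unfold e. field. pose proof (lt_0_INR (S L) (Nat.lt_0_succ L)). lra. }
  lra.
Qed.

Lemma dS_polish {Y : Type} (rho : Y -> Y -> R) (dy : nat -> Y) :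
  bmetric rho -> complete_metric rho -> (forall y eps, eps > 0 -> exists n, rho y (dy n) < eps) ->
  polish_metric (dS rho).
Proof.
  intros Hb Hc Hd. split; [apply dS_metric; auto|split; [apply dS_complete; auto|]].
  eapply dS_separable; eauto.
Qed.


Definition rhoNX {X : Type} (d : X -> X -> R) (p q : nat * X) : R :=
  if Nat.eq_dec (fst p) (fst q) then Rmin 1 (d (snd p) (snd q)) else 1.

Lemma rhoNX_bmetric {X : Type} (d : X -> X -> R) : is_metric d -> bmetric (rhoNX d).
Proof.
  intros [Mp [Me [Ms Mt]]]. unfold rhoNX.
  split; [split; [|split; [|split]]|].
  - intros [a y] [b y']; simpl. destruct (Nat.eq_dec a b); [|lra].
    apply Rmin_glb; [lra|auto].
  - intros [a y] [b y']; simpl. split.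
    + destruct (Nat.eq_dec a b) as [<-|h]; [|lra].
      intro H. unfold Rmin in H. destruct (Rle_dec 1 (d y y')); [lra|].
      apply Me in H. subst; auto.
    + intro H. injection H as <- <-. destruct (Nat.eq_dec a a); [|congruence].
      assert (d y y = 0) by (apply Me; auto). rewrite H. unfold Rmin; destruct (Rle_dec 1 0); lra.
  - intros [a y] [b y']; simpl. destruct (Nat.eq_dec a b), (Nat.eq_dec b a); try lra; try congruence.
    all: try (rewrite Ms; reflexivity).
  - intros [a y] [b y'] [c y'']; simpl.
    assert (Hm : forall u, 0 <= u -> 0 <= Rmin 1 u <= 1) by (intros; unfold Rmin; destruct (Rle_dec 1 u); lra).
    destruct (Nat.eq_dec a c), (Nat.eq_dec a b), (Nat.eq_dec b c); subst; try congruence;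
      try (pose proof (Hm _ (Mp y y')); pose proof (Hm _ (Mp y' y'')); pose proof (Hm _ (Mp y y'')); lra).
    specialize (Mt y y' y''). pose proof (Mp y y'). pose proof (Mp y' y'').
    unfold Rmin. repeat destruct (Rle_dec _ _); lra.
  - intros [a y] [b y']; simpl. destruct (Nat.eq_dec a b); [apply Rmin_l|lra].
Qed.

Lemma rhoNX_complete {X : Type} (d : X -> X -> R) : is_metric d -> complete_metric d ->
  complete_metric (rhoNX d).
Proof.
  intros Hm Hc u Hu.
  destruct (Hu 1 ltac:(lra)) as [N0 HN0].
  assert (Hfst : forall m, (m >= N0)%nat -> fst (u m) = fst (u N0)).
  { intros m Hm'. specialize (HN0 m N0 Hm' (le_n _)). unfold rhoNX in HN0.
    destruct (Nat.eq_dec _ _); auto. lra. }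
  destruct (Hc (fun m => snd (u (N0 + m)%nat))) as [y Hy].
  { intros eps Heps. destruct (Hu (Rmin eps 1)) as [N HN].
    { apply Rmin_pos; lra. }
    exists N. intros m n Hm' Hn. specialize (HN (N0 + m)%nat (N0 + n)%nat ltac:(lia) ltac:(lia)).
    unfold rhoNX in HN. destruct (Nat.eq_dec _ _).
    - unfold Rmin in *. repeat destruct (Rle_dec _ _); lra.
    - unfold Rmin in HN. destruct (Rle_dec eps 1); lra. }
  exists (fst (u N0), y). intros eps Heps.
  destruct (Hy eps Heps) as [N HN].
  exists (N0 + N)%nat. intros n Hn. unfold rhoNX. simpl.
  rewrite (Hfst n) by lia. destruct (Nat.eq_dec _ _); [|congruence].
  specialize (HN (n - N0)%nat ltac:(lia)). replace (N0 + (n - N0))%nat with n in HN by lia.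
  eapply Rle_lt_trans; [apply Rmin_r|auto].
Qed.

Lemma rhoNX_dense {X : Type} (d : X -> X -> R) (dx : nat -> X) :
  (forall y eps, eps > 0 -> exists n, d y (dx n) < eps) ->
  forall y eps, eps > 0 -> exists n, rhoNX d y (let '(a, b) := Cantor.of_nat n in (a, dx b)) < eps.
Proof.
  intros Hd [a y] eps Heps. destruct (Hd y eps Heps) as [b Hb].
  exists (Cantor.to_nat (a, b)). rewrite Cantor.cancel_of_to. unfold rhoNX; simpl.
  destruct (Nat.eq_dec a a); [|congruence]. eapply Rle_lt_trans; [apply Rmin_r|auto].
Qed.

Definition ZZ (X : Type) := nat -> nat * X.
Definition dZZ {X : Type} (d : X -> X -> R) : ZZ X -> ZZ X -> R := dS (rhoNX d).

Lemma ZZ_polish {X : Type} (d : X -> X -> R) (x0 : X) :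
  is_metric d -> compact_space d -> polish_metric (dZZ d).
Proof.
  intros Hm Hc. destruct (compact_dense d x0 Hm Hc) as [dx Hdx].
  apply (dS_polish _ (fun n => let '(a, b) := Cantor.of_nat n in (a, dx b))).
  - apply rhoNX_bmetric; auto.
  - apply rhoNX_complete; auto. apply compact_complete; auto.
  - apply rhoNX_dense; auto.
Qed.

Lemma dZZ_coord {X : Type} (d : X -> X -> R) (z z' : ZZ X) n :
  is_metric d -> dZZ d z z' < (/2)^n ->
  fst (z n) = fst (z' n) /\ d (snd (z n)) (snd (z' n)) <= 2^n * dZZ d z z'.
Proof.
  intros Hm H. pose proof (term_le_dS (rhoNX d) z z' n (rhoNX_bmetric d Hm)) as T.
  fold (dZZ d z z') in T. unfold term, rhoNX in T.
  pose proof (half_pow_pos n). pose proof (pow2_half n). pose proof (pow2_pos n).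
  destruct (Nat.eq_dec _ _).
  - split; auto. unfold Rmin in T. destruct (Rle_dec 1 (d (snd (z n)) (snd (z' n)))).
    + nra.
    + nra.
  - nra.
Qed.


Lemma inv_small r : r > 0 -> exists k : nat, / (INR k + 1) < r.
Proof.
  intro Hr. destruct (archimed (/ r)) as [A _].
  assert (Hz : (0 <= up (/ r))%Z).
  { apply le_IZR. pose proof (Rinv_0_lt_compat r Hr). change (IZR 0) with 0. lra. }
  exists (Z.to_nat (up (/ r))). rewrite INR_IZR_INZ, Z2Nat.id by auto.
  pose proof (Rinv_0_lt_compat r Hr).
  apply Rlt_le_trans with (/ / r); [|rewrite Rinv_inv; lra].
  apply Rinv_lt_contravar; [|lra].
  apply Rmult_lt_0_compat; auto. lra.
Qed.

Lemma inv_le k n : (k <= n)%nat -> / (INR n + 1) <= / (INR k + 1).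
Proof.
  intro H. apply Rinv_le_contravar. pose proof (pos_INR k); lra.
  apply le_INR in H. lra.
Qed.

Lemma inv_pos k : 0 < / (INR k + 1).
Proof. apply Rinv_0_lt_compat. pose proof (pos_INR k); lra. Qed.

Lemma cluster (u : nat -> R) : (forall n, 0 <= u n <= 1) ->
  exists l, 0 <= l <= 1 /\ forall k, exists p, (p >= k)%nat /\ Rabs (u p - l) < / (INR k + 1).
Proof.
  intro Hu. destruct (Bolzano_Weierstrass u _ (compact_P3 0 1) Hu) as [l Hl].
  assert (Hk : forall k, exists p, (p >= k)%nat /\ Rabs (u p - l) < / (INR k + 1)).
  { intro k. destruct (Hl (disc l (mkposreal _ (inv_pos k))) k) as [p [Hp1 Hp2]].
    - exists (mkposreal _ (inv_pos k)). intros y Hy; exact Hy.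
    - exists p. split; auto. }
  exists l. split; auto. split.
  - destruct (Rle_or_lt 0 l) as [h|h]; auto. exfalso.
    destruct (inv_small (- l)) as [k Hk']; [lra|].
    destruct (Hk k) as [p [_ Hp]]. pose proof (Hu p). apply Rabs_def2 in Hp. lra.
  - destruct (Rle_or_lt l 1) as [h|h]; auto. exfalso.
    destruct (inv_small (l - 1)) as [k Hk']; [lra|].
    destruct (Hk k) as [p [_ Hp]]. pose proof (Hu p). apply Rabs_def2 in Hp. lra.
Qed.

Lemma heine_simplex {X : Type} (d : X -> X -> R) (sg : R -> R -> X) :
  is_metric d -> cont_on_simplex2 d sg ->
  forall eps, eps > 0 -> exists delta, delta > 0 /\
    forall s t s' t', simplex2_pt s t -> simplex2_pt s' t' ->
      Rabs (s' - s) + Rabs (t' - t) < delta -> d (sg s' t') (sg s t) < eps.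
Proof.
  intros [Mp [Me [Ms Mt]]] Hc eps Heps. apply NNPP. intro Hno.
  assert (Hn : forall n : nat, exists q : R * R * R * R,
     let '(s, t, s', t') := q in
     simplex2_pt s t /\ simplex2_pt s' t' /\ Rabs (s' - s) + Rabs (t' - t) < / (INR n + 1)
     /\ d (sg s' t') (sg s t) >= eps).
  { intro n. apply NNPP. intro Hq. apply Hno. exists (/ (INR n + 1)). split; [apply inv_pos|].
    intros s t s' t' H1 H2 H3. apply Rnot_ge_lt. intro H4. apply Hq.
    exists (s, t, s', t'). auto. }
  set (Q := fun n => proj1_sig (constructive_indefinite_description _ (Hn n))).
  assert (HQ : forall n, let '(s, t, s', t') := Q n in
     simplex2_pt s t /\ simplex2_pt s' t' /\ Rabs (s' - s) + Rabs (t' - t) < / (INR n + 1)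
     /\ d (sg s' t') (sg s t) >= eps).
  { intro n. unfold Q. destruct (constructive_indefinite_description _ (Hn n)); simpl; auto. }
  set (S1 := fun n => fst (fst (fst (Q n)))).
  set (T1 := fun n => snd (fst (fst (Q n)))).
  set (S2 := fun n => snd (fst (Q n))).
  set (T2 := fun n => snd (Q n)).
  assert (HQ' : forall n, simplex2_pt (S1 n) (T1 n) /\ simplex2_pt (S2 n) (T2 n) /\
     Rabs (S2 n - S1 n) + Rabs (T2 n - T1 n) < / (INR n + 1) /\ d (sg (S2 n) (T2 n)) (sg (S1 n) (T1 n)) >= eps).
  { intro n. specialize (HQ n). unfold S1, T1, S2, T2. destruct (Q n) as [[[a b] c] e]. simpl. exact HQ. }
  destruct (cluster S1) as [ls [Hls Hcs]].
  { intro n. destruct (HQ' n) as [[h1 [h2 h3]] _]. lra. }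
  set (phi := fun k => proj1_sig (constructive_indefinite_description _ (Hcs k))).
  assert (Hphi : forall k, (phi k >= k)%nat /\ Rabs (S1 (phi k) - ls) < / (INR k + 1)).
  { intro k. unfold phi. destruct (constructive_indefinite_description _ (Hcs k)); simpl; auto. }
  destruct (cluster (fun k => T1 (phi k))) as [lt [Hlt Hct]].
  { intro n. destruct (HQ' (phi n)) as [[h1 [h2 h3]] _]. lra. }
  set (psi := fun k => proj1_sig (constructive_indefinite_description _ (Hct k))).
  assert (Hpsi : forall k, (psi k >= k)%nat /\ Rabs (T1 (phi (psi k)) - lt) < / (INR k + 1)).
  { intro k. unfold psi. destruct (constructive_indefinite_description _ (Hct k)); simpl; auto. }
  set (idx := fun k => phi (psi k)).
  assert (Hidx : forall k, (idx k >= k)%nat /\ Rabs (S1 (idx k) - ls) < / (INR k + 1)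
                    /\ Rabs (T1 (idx k) - lt) < / (INR k + 1)).
  { intro k. destruct (Hpsi k) as [h1 h2]. destruct (Hphi (psi k)) as [h3 h4].
    unfold idx. split; [lia|split; auto].
    eapply Rlt_le_trans; [exact h4|apply inv_le; lia]. }
  assert (HL : simplex2_pt ls lt).
  { split; [lra|split; [lra|]]. destruct (Rle_or_lt (ls + lt) 1) as [h|h]; auto. exfalso.
    destruct (inv_small ((ls + lt - 1)/2)) as [k Hk]; [lra|].
    destruct (Hidx k) as [_ [h1 h2]]. destruct (HQ' (idx k)) as [[_ [_ h3]] _].
    apply Rabs_def2 in h1. apply Rabs_def2 in h2. lra. }
  destruct (Hc ls lt HL (eps/2) ltac:(lra)) as [d0 [Hd0 Hcont]].
  destruct (inv_small (d0/3)) as [k Hk]; [lra|].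
  destruct (Hidx k) as [hi [h1 h2]].
  destruct (HQ' (idx k)) as [P1 [P2 [P3 P4]]].
  assert (h3 : / (INR (idx k) + 1) <= / (INR k + 1)) by (apply inv_le; lia).
  assert (E1 : d (sg (S1 (idx k)) (T1 (idx k))) (sg ls lt) < eps/2) by (apply Hcont; auto; lra).
  assert (E2 : d (sg (S2 (idx k)) (T2 (idx k))) (sg ls lt) < eps/2).
  { apply Hcont; auto.
    pose proof (Rabs_triang (S2 (idx k) - S1 (idx k)) (S1 (idx k) - ls)).
    pose proof (Rabs_triang (T2 (idx k) - T1 (idx k)) (T1 (idx k) - lt)).
    replace (S2 (idx k) - S1 (idx k) + (S1 (idx k) - ls)) with (S2 (idx k) - ls) in H by ring.
    replace (T2 (idx k) - T1 (idx k) + (T1 (idx k) - lt)) with (T2 (idx k) - lt) in H0 by ring.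
    lra. }
  specialize (Mt (sg (S2 (idx k)) (T2 (idx k))) (sg ls lt) (sg (S1 (idx k)) (T1 (idx k)))).
  rewrite (Ms (sg ls lt)) in Mt. lra.
Qed.


Definition pt (q : nat) : R * R :=
  let '(m, r) := Cantor.of_nat q in let '(i, j) := Cantor.of_nat r in (INR i / 2 ^ m, INR j / 2 ^ m).
Definition dist1 (p p' : R * R) : R := Rabs (fst p - fst p') + Rabs (snd p - snd p').
Definition inS (p : R * R) : Prop := simplex2_pt (fst p) (snd p).

Lemma floor_nat r : 0 <= r -> exists i : nat, INR i <= r < INR i + 1.
Proof.
  intro Hr. pose proof (base_Int_part r) as [B1 B2].
  assert (Hz : (0 <= Int_part r)%Z).
  { destruct (Z_le_gt_dec 0 (Int_part r)); auto.
    assert (Int_part r <= -1)%Z by lia. apply IZR_le in H. lra. }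
  exists (Z.to_nat (Int_part r)). rewrite INR_IZR_INZ, Z2Nat.id by auto. lra.
Qed.

Lemma dist1_sym p p' : dist1 p p' = dist1 p' p.
Proof. unfold dist1. rewrite (Rabs_minus_sym (fst p)), (Rabs_minus_sym (snd p)). auto. Qed.

Lemma dist1_tri p p' p'' : dist1 p p'' <= dist1 p p' + dist1 p' p''.
Proof.
  unfold dist1.
  pose proof (Rabs_triang (fst p - fst p') (fst p' - fst p'')).
  pose proof (Rabs_triang (snd p - snd p') (snd p' - snd p'')).
  replace (fst p - fst p' + (fst p' - fst p'')) with (fst p - fst p'') in H by ring.
  replace (snd p - snd p' + (snd p' - snd p'')) with (snd p - snd p'') in H0 by ring.
  lra.
Qed.

Lemma dist1_nonneg p p' : 0 <= dist1 p p'.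
Proof. unfold dist1. pose proof (Rabs_pos (fst p - fst p')). pose proof (Rabs_pos (snd p - snd p')). lra. Qed.

Lemma dyadic_approx p eps : inS p -> eps > 0 -> exists q, inS (pt q) /\ dist1 (pt q) p < eps.
Proof.
  destruct p as [s t]. intros [Hs [Ht Hst]] He. simpl in *.
  destruct (half_pow_small (eps/2)) as [m Hm]; [lra|].
  pose proof (pow2_pos m) as P. pose proof (pow2_half m) as P2.
  destruct (floor_nat (s * 2^m)) as [i Hi]; [nra|].
  destruct (floor_nat (t * 2^m)) as [j Hj]; [nra|].
  exists (Cantor.to_nat (m, Cantor.to_nat (i, j))).
  unfold pt. rewrite !Cantor.cancel_of_to.
  assert (A1 : INR i / 2^m <= s).
  { apply Rmult_le_reg_r with (2^m); auto. unfold Rdiv. rewrite Rmult_assoc, Rinv_l by lra. lra. }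
  assert (A2 : s < INR i / 2^m + (/2)^m).
  { apply Rmult_lt_reg_r with (2^m); auto. unfold Rdiv. rewrite Rmult_plus_distr_r, Rmult_assoc, Rinv_l by lra.
    replace ((/ 2) ^ m * 2 ^ m) with 1 by (rewrite Rmult_comm; auto). lra. }
  assert (A3 : INR j / 2^m <= t).
  { apply Rmult_le_reg_r with (2^m); auto. unfold Rdiv. rewrite Rmult_assoc, Rinv_l by lra. lra. }
  assert (A4 : t < INR j / 2^m + (/2)^m).
  { apply Rmult_lt_reg_r with (2^m); auto. unfold Rdiv. rewrite Rmult_plus_distr_r, Rmult_assoc, Rinv_l by lra.
    replace ((/ 2) ^ m * 2 ^ m) with 1 by (rewrite Rmult_comm; auto). lra. }
  assert (A5 : 0 <= INR i / 2^m) by (unfold Rdiv; apply Rmult_le_pos; [apply pos_INR|left; apply Rinv_0_lt_compat; auto]).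
  assert (A6 : 0 <= INR j / 2^m) by (unfold Rdiv; apply Rmult_le_pos; [apply pos_INR|left; apply Rinv_0_lt_compat; auto]).
  split.
  - unfold inS; simpl. repeat split; lra.
  - unfold dist1; simpl. rewrite !Rabs_left1 by lra. lra.
Qed.

Fixpoint rad (w : nat -> nat) (j : nat) : R :=
  match j with
  | O => / (2 * (INR (w O) + 1))
  | S j' => Rmin (rad w j') (/ (2 * (INR (w (S j')) + 1)))
  end.

Lemma inv2_pos k : 0 < / (2 * (INR k + 1)).
Proof. apply Rinv_0_lt_compat. pose proof (pos_INR k). lra. Qed.

Lemma rad_pos w j : 0 < rad w j.
Proof. induction j; simpl; [apply inv2_pos|]. apply Rmin_pos; auto. apply inv2_pos. Qed.

Lemma rad_le_own w j : rad w j <= / (2 * (INR (w j) + 1)).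
Proof. destruct j; simpl; [lra|apply Rmin_r]. Qed.

Lemma rad_mono w i j : (i <= j)%nat -> rad w j <= rad w i.
Proof.
  intro H. induction H; [lra|]. simpl. eapply Rle_trans; [apply Rmin_l|auto].
Qed.

Lemma rad_half w j : 2 * rad w j <= / (INR (w j) + 1).
Proof.
  pose proof (rad_le_own w j). pose proof (pos_INR (w j)).
  assert (/ (2 * (INR (w j) + 1)) = / 2 * / (INR (w j) + 1)) by (field; lra).
  pose proof (inv_pos (w j)). lra.
Qed.

Lemma rad_ext w w' j : (forall i, (i <= j)%nat -> w i = w' i) -> rad w j = rad w' j.
Proof.
  induction j; intro H; simpl.
  - rewrite H; auto.
  - rewrite IHj by (intros; apply H; lia). rewrite H; auto.
Qed.

Definition ModV {X : Type} (d : X -> X -> R) (v : nat -> X) (w : nat -> nat) : Prop :=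
  forall j q q', inS (pt q) -> inS (pt q') -> dist1 (pt q) (pt q') < / (INR (w j) + 1) ->
    d (v q) (v q') <= (/2)^j.

Definition IsExt {X : Type} (d : X -> X -> R) (v : nat -> X) (w : nat -> nat) (p : R * R) (y : X) : Prop :=
  forall j q, inS (pt q) -> dist1 (pt q) p < rad w j -> d (v q) y <= (/2)^j.

Definition ext {X : Type} (d : X -> X -> R) (x0 : X) (v : nat -> X) (w : nat -> nat) : R -> R -> X :=
  fun s t => epsilon (inhabits x0) (fun y => IsExt d v w (s, t) y).

Lemma le_eps_le a b : (forall eps, eps > 0 -> a <= b + eps) -> a <= b.
Proof.
  intro H. destruct (Rle_or_lt a b) as [h|h]; auto.
  specialize (H ((a - b)/2) ltac:(lra)). lra.
Qed.

Lemma isext_unique {X : Type} (d : X -> X -> R) v w p y y' :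
  is_metric d -> inS p -> IsExt d v w p y -> IsExt d v w p y' -> y = y'.
Proof.
  intros [Mp [Me [Ms Mt]]] Hp H1 H2. apply Me.
  assert (forall j, d y y' <= 2 * (/2)^j).
  { intro j. destruct (dyadic_approx p (rad w j) Hp (rad_pos w j)) as [q [Hq1 Hq2]].
    specialize (H1 j q Hq1 Hq2). specialize (H2 j q Hq1 Hq2).
    specialize (Mt y (v q) y'). rewrite (Ms y (v q)) in Mt. lra. }
  apply Rle_antisym; [|apply Mp]. apply le_eps_le. intros eps He.
  destruct (half_pow_small (eps/2)) as [j Hj]; [lra|]. specialize (H j). lra.
Qed.

Lemma isext_exists {X : Type} (d : X -> X -> R) v w p :
  is_metric d -> complete_metric d -> ModV d v w -> inS p -> exists y, IsExt d v w p y.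
Proof.
  intros Hm Hc Hv Hp. pose proof Hm as [Mp [Me [Ms Mt]]].
  assert (Hq : forall n, exists q, inS (pt q) /\ dist1 (pt q) p < rad w n).
  { intro n. apply dyadic_approx; auto. apply rad_pos. }
  set (Q := fun n => proj1_sig (constructive_indefinite_description _ (Hq n))).
  assert (HQ : forall n, inS (pt (Q n)) /\ dist1 (pt (Q n)) p < rad w n).
  { intro n. unfold Q. destruct (constructive_indefinite_description _ (Hq n)); simpl; auto. }
  assert (Key : forall j q n, inS (pt q) -> dist1 (pt q) p < rad w j -> (n >= j)%nat ->
            d (v q) (v (Q n)) <= (/2)^j).
  { intros j q n H1 H2 H3. apply Hv; auto; [apply HQ|].
    pose proof (dist1_tri (pt q) p (pt (Q n))). rewrite (dist1_sym p) in H.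
    pose proof (proj2 (HQ n)). pose proof (rad_mono w j n H3). pose proof (rad_half w j). lra. }
  destruct (Hc (fun n => v (Q n))) as [y Hy].
  - intros eps He. destruct (half_pow_small eps He) as [N HN].
    exists N. intros m n Hm' Hn. eapply Rle_lt_trans; [|exact HN].
    eapply Rle_trans; [apply (Key N (Q m) n); auto; try apply HQ|lra].
    pose proof (proj2 (HQ m)). pose proof (rad_mono w N m Hm'). lra.
  - exists y. intros j q H1 H2. apply le_eps_le. intros eps He.
    destruct (Hy eps He) as [N HN].
    specialize (HN (Nat.max N j) ltac:(lia)).
    specialize (Key j q (Nat.max N j) H1 H2 ltac:(lia)).
    specialize (Mt (v q) (v (Q (Nat.max N j))) y). lra.
Qed.

Lemma ext_spec {X : Type} (d : X -> X -> R) x0 v w s t :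
  is_metric d -> complete_metric d -> ModV d v w -> inS (s, t) -> IsExt d v w (s, t) (ext d x0 v w s t).
Proof.
  intros Hm Hc Hv Hp. unfold ext. apply epsilon_spec. apply isext_exists; auto.
Qed.

Lemma ext_cont {X : Type} (d : X -> X -> R) x0 v w :
  is_metric d -> complete_metric d -> ModV d v w -> cont_on_simplex2 d (ext d x0 v w).
Proof.
  intros Hm Hc Hv s t Hst eps He. pose proof Hm as [Mp [Me [Ms Mt]]].
  destruct (half_pow_small (eps/2)) as [j Hj]; [lra|].
  exists (rad w j / 2). split; [pose proof (rad_pos w j); lra|].
  intros s' t' Hst' Hd.
  destruct (dyadic_approx (s, t) (rad w j / 2)) as [q [Hq1 Hq2]]; auto.
  { pose proof (rad_pos w j); lra. }
  assert (E1 := ext_spec d x0 v w s t Hm Hc Hv Hst j q Hq1 ltac:(pose proof (rad_pos w j); lra)).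
  assert (Hq3 : dist1 (pt q) (s', t') < rad w j).
  { pose proof (dist1_tri (pt q) (s, t) (s', t')).
    assert (dist1 (s, t) (s', t') = Rabs (s' - s) + Rabs (t' - t)).
    { unfold dist1; simpl. rewrite (Rabs_minus_sym s), (Rabs_minus_sym t). auto. }
    lra. }
  assert (E2 := ext_spec d x0 v w s' t' Hm Hc Hv Hst' j q Hq1 Hq3).
  specialize (Mt (ext d x0 v w s' t') (v q) (ext d x0 v w s t)). rewrite (Ms (ext d x0 v w s' t') (v q)) in Mt. lra.
Qed.

Definition UCmod {X : Type} (d : X -> X -> R) (sg : R -> R -> X) (w : nat -> nat) : Prop :=
  forall j p p', inS p -> inS p' -> dist1 p p' < / (INR (w j) + 1) ->
    d (sg (fst p) (snd p)) (sg (fst p') (snd p')) <= (/2)^j.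

Lemma ext_agree {X : Type} (d : X -> X -> R) x0 sg w s t :
  is_metric d -> complete_metric d -> UCmod d sg w -> inS (s, t) ->
  ext d x0 (fun q => sg (fst (pt q)) (snd (pt q))) w s t = sg s t.
Proof.
  intros Hm Hc Hu Hp.
  assert (Hv : ModV d (fun q => sg (fst (pt q)) (snd (pt q))) w).
  { intros j q q' H1 H2 H3. apply Hu; auto. }
  symmetry. apply (isext_unique d (fun q => sg (fst (pt q)) (snd (pt q))) w (s, t)); auto.
  - intros j q H1 H2. apply (Hu j (pt q) (s, t)); auto.
    pose proof (rad_half w j). pose proof (rad_pos w j). lra.
  - apply ext_spec; auto.
Qed.

Lemma ext_conv {X : Type} (d : X -> X -> R) x0 (vn : nat -> nat -> X) (wn : nat -> nat -> nat) v w s t :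
  is_metric d -> complete_metric d ->
  (forall n, ModV d (vn n) (wn n)) -> ModV d v w ->
  (forall j, exists N, forall n, (n >= N)%nat -> forall i, (i <= j)%nat -> wn n i = w i) ->
  (forall q eps, eps > 0 -> exists N, forall n, (n >= N)%nat -> d (vn n q) (v q) < eps) ->
  inS (s, t) ->
  forall eps, eps > 0 -> exists N, forall n, (n >= N)%nat ->
    d (ext d x0 (vn n) (wn n) s t) (ext d x0 v w s t) < eps.
Proof.
  intros Hm Hc Hvn Hv Hw Hconv Hp eps He. pose proof Hm as [Mp [Me [Ms Mt]]].
  destruct (half_pow_small (eps/4)) as [j Hj]; [lra|].
  destruct (dyadic_approx (s, t) (rad w j) Hp (rad_pos w j)) as [q [Hq1 Hq2]].
  destruct (Hw j) as [N1 HN1].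
  destruct (Hconv q (eps/2) ltac:(lra)) as [N2 HN2].
  exists (Nat.max N1 N2). intros n Hn.
  assert (Hr : rad (wn n) j = rad w j) by (apply rad_ext; intros; apply HN1; auto; lia).
  assert (E1 := ext_spec d x0 (vn n) (wn n) s t Hm Hc (Hvn n) Hp j q Hq1 ltac:(rewrite Hr; auto)).
  assert (E2 := ext_spec d x0 v w s t Hm Hc Hv Hp j q Hq1 Hq2).
  specialize (HN2 n ltac:(lia)).
  pose proof (Mt (ext d x0 (vn n) (wn n) s t) (vn n q) (v q)).
  pose proof (Mt (ext d x0 (vn n) (wn n) s t) (v q) (ext d x0 v w s t)).
  rewrite (Ms _ (vn n q)) in H. lra.
Qed.


Fixpoint sumZ (N : nat) (F : nat -> Z) : Z :=
  match N with O => 0%Z | S N' => (sumZ N' F + F N')%Z end.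

Definition bZ (P : Prop) : Z := if excluded_middle_informative P then 1%Z else 0%Z.

Lemma sumZ_ext N F G : (forall l, (l < N)%nat -> F l = G l) -> sumZ N F = sumZ N G.
Proof. induction N; intro H; simpl; auto. rewrite IHN, H; auto. Qed.

Lemma sumZ_plus N F G : sumZ N (fun l => (F l + G l)%Z) = (sumZ N F + sumZ N G)%Z.
Proof. induction N; simpl; auto. rewrite IHN. lia. Qed.

Lemma sumZ_zero N F : (forall l, (l < N)%nat -> F l = 0%Z) -> sumZ N F = 0%Z.
Proof. induction N; intro H; simpl; auto. rewrite IHN, H; auto. Qed.

Lemma sumZ_nonneg N F : (forall l, (l < N)%nat -> (0 <= F l)%Z) -> (0 <= sumZ N F)%Z.
Proof. induction N; intro H; simpl; [lia|]. specialize (IHN (fun l h => H l ltac:(lia))). specialize (H N ltac:(lia)). lia. Qed.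

Lemma sumZ_ge1 N F l0 : (forall l, (l < N)%nat -> (0 <= F l)%Z) -> (l0 < N)%nat -> (1 <= F l0)%Z ->
  (1 <= sumZ N F)%Z.
Proof.
  induction N; intros H Hl Hf; [lia|]. simpl.
  destruct (Nat.eq_dec l0 N) as [->|h].
  - pose proof (sumZ_nonneg N F (fun l h => H l ltac:(lia))). lia.
  - specialize (IHN (fun l h => H l ltac:(lia)) ltac:(lia) Hf). specialize (H N ltac:(lia)). lia.
Qed.

Lemma sumZ_shift N F : sumZ (S N) F = (F 0%nat + sumZ N (fun l => F (S l)))%Z.
Proof. induction N; simpl in *; [lia|]. rewrite IHN. lia. Qed.

Lemma bZ_range P : (0 <= bZ P <= 1)%Z.
Proof. unfold bZ. destruct (excluded_middle_informative P); lia. Qed.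

Lemma bZ_true (P : Prop) : P -> bZ P = 1%Z.
Proof. intro H. unfold bZ. destruct (excluded_middle_informative P); tauto. Qed.
Lemma bZ_false (P : Prop) : ~ P -> bZ P = 0%Z.
Proof. intro H. unfold bZ. destruct (excluded_middle_informative P); tauto. Qed.
Lemma bZ_iff (P Q : Prop) : (P <-> Q) -> bZ P = bZ Q.
Proof.
  intro H. unfold bZ. destruct (excluded_middle_informative P), (excluded_middle_informative Q); tauto.
Qed.

Lemma comb N (c : nat -> Z) (R : nat -> nat -> Prop) :
  (forall l, R l l) -> (forall l l', R l l' -> R l' l) -> (forall l l' l'', R l l' -> R l' l'' -> R l l'') ->
  (forall l, (l < N)%nat -> sumZ N (fun l' => (c l' * bZ (R l l'))%Z) = 0%Z) ->
  forall J : nat -> Prop,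
  (forall l l', (l < N)%nat -> (l' < N)%nat -> J l -> R l l' -> J l') ->
  sumZ N (fun l => (c l * bZ (J l))%Z) = 0%Z.
Proof.
  intros Rr Rs Rt H0.
  assert (Main : forall B J, (sumZ N (fun l => bZ (J l)) <= Z.of_nat B)%Z ->
    (forall l l', (l < N)%nat -> (l' < N)%nat -> J l -> R l l' -> J l') ->
    sumZ N (fun l => (c l * bZ (J l))%Z) = 0%Z).
  { induction B; intros J HB HJ.
    - apply sumZ_zero. intros l Hl. destruct (classic (J l)) as [h|h].
      + exfalso. pose proof (sumZ_ge1 N (fun l => bZ (J l)) l (fun l _ => proj1 (bZ_range _)) Hl ltac:(cbv beta; rewrite bZ_true; auto; lia)). lia.
      + rewrite bZ_false; auto; lia.
    - destruct (classic (exists l0, (l0 < N)%nat /\ J l0)) as [[l0 [Hl0 HJ0]]|Hno].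
      + set (J' := fun l => J l /\ ~ R l0 l).
        assert (Pw : forall l, (l < N)%nat -> bZ (J l) = (bZ (J' l) + bZ (R l0 l))%Z).
        { intros l Hl. unfold J'. destruct (classic (R l0 l)) as [h|h].
          - rewrite (bZ_true (J l)) by (apply (HJ l0 l); auto).
            rewrite (bZ_false (J l /\ ~ R l0 l)) by tauto. rewrite bZ_true; auto.
          - rewrite (bZ_false (R l0 l)) by auto. rewrite (bZ_iff (J l) (J l /\ ~ R l0 l)) by tauto. lia. }
        assert (HJ' : forall l l', (l < N)%nat -> (l' < N)%nat -> J' l -> R l l' -> J' l').
        { intros l l' Hl Hl' [h1 h2] h3. split; [apply (HJ l l'); auto|].
          intro h4. apply h2. apply (Rt l0 l' l); auto. }
        assert (Cnt : (sumZ N (fun l => bZ (J l)) = sumZ N (fun l => bZ (J' l)) + sumZ N (fun l => bZ (R l0 l)))%Z).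
        { rewrite <- sumZ_plus. apply sumZ_ext. auto. }
        assert (C1 : (1 <= sumZ N (fun l => bZ (R l0 l)))%Z).
        { apply (sumZ_ge1 N _ l0); auto. intros; apply bZ_range. cbv beta. rewrite bZ_true; auto; lia. }
        assert (IH := IHB J' ltac:(rewrite Nat2Z.inj_succ in HB; lia) HJ').
        rewrite (sumZ_ext N _ (fun l => (c l * bZ (J' l) + c l * bZ (R l0 l))%Z)).
        * rewrite sumZ_plus, IH, H0; auto.
        * intros l Hl. rewrite Pw; auto. lia.
      + apply sumZ_zero. intros l Hl. rewrite bZ_false; [lia|]. intro h. apply Hno; eauto. }
  intros J HJ. apply (Main (Z.to_nat (sumZ N (fun l => bZ (J l))))); auto.
  rewrite Z2Nat.id; [lia|]. apply sumZ_nonneg. intros; apply bZ_range.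
Qed.

Definition dflt {X : Type} (x0 : X) : Z * (R -> X) := (0%Z, fun _ => x0).

Lemma cf_nth {X : Type} (x0 : X) (L : chain1 X) p :
  cf L p = sumZ (length L) (fun l => (fst (nth l L (dflt x0)) * bZ (same_simplex1 (snd (nth l L (dflt x0))) p))%Z).
Proof.
  induction L as [|[k q] L IH]; [reflexivity|].
  cbn [cf length]. rewrite sumZ_shift. cbn [nth fst snd]. rewrite IH. unfold ind, bZ. reflexivity.
Qed.

Lemma null_limit {X : Type} (d : X -> X -> R) (x0 : X) (L : chain1 X) (Ls : nat -> chain1 X) :
  is_metric d ->
  (forall n, map fst (Ls n) = map fst L) ->
  (forall n, null_chain1 (Ls n)) ->
  (forall l, (l < length L)%nat -> forall u, unit_int u -> forall eps, eps > 0 ->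
     exists M, forall n, (n >= M)%nat ->
       d (snd (nth l (Ls n) (dflt x0)) u) (snd (nth l L (dflt x0)) u) < eps) ->
  null_chain1 L.
Proof.
  intros Hm H1 H2 H3. pose proof Hm as [Mp [Me [Ms Mt]]].
  set (N := length L).
  assert (Hlen : forall n, length (Ls n) = N).
  { intro n. unfold N. rewrite <- (length_map fst (Ls n)), H1, length_map; auto. }
  assert (Hc : forall n l, fst (nth l (Ls n) (dflt x0)) = fst (nth l L (dflt x0))).
  { intros n l. rewrite <- !(map_nth fst). rewrite H1. reflexivity. }
  set (P := fun l => snd (nth l L (dflt x0))).
  set (Pn := fun n l => snd (nth l (Ls n) (dflt x0))).
  set (c := fun l => fst (nth l L (dflt x0))).
  set (T := fun l l' => same_simplex1 (P l) (P l')).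
  assert (Step1 : exists M, forall l, (l <= N)%nat -> forall n, (n >= M)%nat -> forall l', (l' <= N)%nat ->
      (l < N)%nat -> (l' < N)%nat -> same_simplex1 (Pn n l) (Pn n l') -> T l l').
  { apply fin_max. intros l Hl.
    destruct (fin_max N (fun l' n => (l < N)%nat -> (l' < N)%nat -> same_simplex1 (Pn n l) (Pn n l') -> T l l')) as [K HK].
    - intros l' Hl'. destruct (classic (T l l')) as [h|h].
      + exists 0%nat. intros; auto.
      + destruct (classic ((l < N)%nat /\ (l' < N)%nat)) as [[hl hl']|hn]; [|exists 0%nat; intros; tauto].
        unfold T, same_simplex1 in h. apply not_all_ex_not in h. destruct h as [u hu].
        apply imply_to_and in hu. destruct hu as [Hu hu].
        assert (Hd : d (P l u) (P l' u) > 0).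
        { destruct (Mp (P l u) (P l' u)) as [h|h]; auto. symmetry in h. apply Me in h. contradiction. }
        destruct (H3 l hl u Hu (d (P l u) (P l' u) / 3) ltac:(lra)) as [M1 HM1].
        destruct (H3 l' hl' u Hu (d (P l u) (P l' u) / 3) ltac:(lra)) as [M2 HM2].
        exists (Nat.max M1 M2). intros n Hn _ _ Hs. exfalso.
        specialize (HM1 n ltac:(lia)). specialize (HM2 n ltac:(lia)).
        fold (Pn n l) (P l) in HM1. fold (Pn n l') (P l') in HM2.
        rewrite (Hs u Hu) in HM1.
        pose proof (Mt (P l u) (Pn n l' u) (P l' u)). rewrite (Ms (P l u) (Pn n l' u)) in H. lra.
    - exists K. intros n Hn l' Hl'. apply HK; auto.
  }
  destruct Step1 as [M HM].
  apply null_cf. intro p. rewrite (cf_nth x0). fold N.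
  change (sumZ N (fun l => (c l * bZ (same_simplex1 (P l) p))%Z) = 0%Z).
  apply (comb N c T).
  - intro l. apply same_refl.
  - intros l l'. apply same_sym.
  - intros l l' l''. apply same_trans.
  - intros l Hl.
    apply (comb N c (fun l1 l2 => same_simplex1 (Pn M l1) (Pn M l2))).
    + intro; apply same_refl.
    + intros l1 l2; apply same_sym.
    + intros l1 l2 l3; apply same_trans.
    + intros l1 Hl1. pose proof (proj1 (null_cf (Ls M)) (H2 M) (Pn M l1)) as E.
      rewrite (cf_nth x0), Hlen in E. rewrite <- E. apply sumZ_ext. intros l2 Hl2.
      rewrite Hc. fold (c l2). f_equal. apply bZ_iff. split; apply same_sym.
    + intros l1 l2 Hl1 Hl2 HT Hs. unfold T in *.
      eapply same_trans; [exact HT|]. apply (HM l1 ltac:(lia) M (le_n _) l2 ltac:(lia) Hl1 Hl2 Hs).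
  - intros l l' Hl Hl' HJ HT. unfold T in HT. eapply same_trans; [apply same_sym, HT|exact HJ].
Qed.


Definition PConv {X : Type} (d : X -> X -> R) (gs : nat -> R -> X) (g : R -> X) : Prop :=
  forall u, unit_int u -> forall eps, eps > 0 -> exists M, forall n, (n >= M)%nat -> d (gs n u) (g u) < eps.

Definition CConv {X : Type} (d : X -> X -> R) (x0 : X) (Ls : nat -> chain1 X) (L : chain1 X) : Prop :=
  (forall n, map fst (Ls n) = map fst L) /\
  (forall l, (l < length L)%nat -> PConv d (fun n => snd (nth l (Ls n) (dflt x0))) (snd (nth l L (dflt x0)))).

Lemma CConv_nil {X : Type} (d : X -> X -> R) x0 : CConv d x0 (fun _ => nil) nil.
Proof. split; auto. intros l Hl. simpl in Hl. lia. Qed.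

Lemma CConv_ext {X : Type} (d : X -> X -> R) x0 A B L :
  (forall n, A n = B n) -> CConv d x0 A L -> CConv d x0 B L.
Proof.
  intros H [H1 H2]. split.
  - intro n. rewrite <- H; auto.
  - intros l Hl u Hu eps He. destruct (H2 l Hl u Hu eps He) as [M HM]. exists M.
    intros n Hn. rewrite <- H. auto.
Qed.

Lemma CConv_cons {X : Type} (d : X -> X -> R) x0 (e : nat -> Z * (R -> X)) k g A L :
  (forall n, fst (e n) = k) -> PConv d (fun n => snd (e n)) g -> CConv d x0 A L ->
  CConv d x0 (fun n => e n :: A n) ((k, g) :: L).
Proof.
  intros He Hg [H1 H2]. split.
  - intro n. simpl. rewrite He, H1. auto.
  - intros [|l] Hl; simpl; auto. apply H2. simpl in Hl. lia.
Qed.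

Lemma CConv_app {X : Type} (d : X -> X -> R) x0 A1 A2 L1 L2 :
  CConv d x0 A1 L1 -> CConv d x0 A2 L2 -> CConv d x0 (fun n => A1 n ++ A2 n) (L1 ++ L2).
Proof.
  intros [H1 H2] [H3 H4]. split.
  - intro n. rewrite !map_app, H1, H3. auto.
  - intros l Hl u Hu eps He.
    assert (Hlen : forall n, length (A1 n) = length L1).
    { intro n. rewrite <- (length_map fst (A1 n)), H1, length_map. auto. }
    rewrite length_app in Hl.
    destruct (Nat.lt_ge_cases l (length L1)) as [h|h].
    + destruct (H2 l h u Hu eps He) as [M HM]. exists M. intros n Hn.
      rewrite !app_nth1 by (try rewrite Hlen; auto). auto.
    + destruct (H4 (l - length L1)%nat ltac:(lia) u Hu eps He) as [M HM]. exists M. intros n Hn.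
      rewrite !app_nth2 by (try rewrite Hlen; auto). rewrite Hlen. auto.
Qed.

Lemma CConv_neg {X : Type} (d : X -> X -> R) x0 A L :
  CConv d x0 A L -> CConv d x0 (fun n => neg_chain1 (A n)) (neg_chain1 L).
Proof.
  intros [H1 H2]. split.
  - intro n. unfold neg_chain1. rewrite !map_map.
    assert (E : forall xs : chain1 X, map (fun x => (- fst x)%Z) xs = map Z.opp (map fst xs)).
    { intro xs. rewrite map_map. auto. }
    rewrite !E, H1. auto.
  - intros l Hl. unfold neg_chain1 in *. rewrite length_map in Hl.
    intros u Hu eps He. destruct (H2 l Hl u Hu eps He) as [M HM]. exists M. intros n Hn.
    assert (Hn' : forall xs : chain1 X, nth l (map (fun e : Z * (R -> X) => ((- fst e)%Z, snd e)) xs) (dflt x0)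
       = ((- fst (nth l xs (dflt x0)))%Z, snd (nth l xs (dflt x0)))).
    { intro xs. exact (map_nth (fun e : Z * (R -> X) => ((- fst e)%Z, snd e)) xs (dflt x0) l). }
    rewrite !Hn'. simpl. auto.
Qed.

Definition S2Conv {X : Type} (d : X -> X -> R) (ss : nat -> R -> R -> X) (s : R -> R -> X) : Prop :=
  forall a b, simplex2_pt a b -> forall eps, eps > 0 -> exists M, forall n, (n >= M)%nat -> d (ss n a b) (s a b) < eps.

Lemma CConv_bd2_cons {X : Type} (d : X -> X -> R) x0 k ss s (Cs : nat -> chain2 X) C :
  S2Conv d ss s -> CConv d x0 (fun n => bd2 (Cs n)) (bd2 C) ->
  CConv d x0 (fun n => bd2 ((k, ss n) :: Cs n)) (bd2 ((k, s) :: C)).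
Proof.
  intros Hs HC. rewrite bd2_cons.
  apply (CConv_ext _ _ (fun n => (k, face0 (ss n)) :: ((-k)%Z, face1 (ss n)) :: (k, face2 (ss n)) :: bd2 (Cs n))).
  { intro n. rewrite bd2_cons; auto. }
  repeat apply CConv_cons; auto; intros u [Hu0 Hu1] eps He; apply Hs; auto;
    unfold simplex2_pt; lra.
Qed.

Lemma CConv_bd2_seq {X : Type} (d : X -> X -> R) x0 (gs : nat -> nat -> Z * (R -> R -> X)) (g : nat -> Z * (R -> R -> X)) K :
  (forall n i, (i < K)%nat -> fst (gs n i) = fst (g i)) ->
  (forall i, (i < K)%nat -> S2Conv d (fun n => snd (gs n i)) (snd (g i))) ->
  CConv d x0 (fun n => bd2 (map (gs n) (seq 0 K))) (bd2 (map g (seq 0 K))).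
Proof.
  intros H1 H2. cut (forall s, (s + K <= K)%nat -> forall K', (K' + s = K)%nat ->
    CConv d x0 (fun n => bd2 (map (gs n) (seq s K'))) (bd2 (map g (seq s K')))).
  { intro H. apply (H 0%nat); lia. }
  intros s _ K'. revert s. induction K' as [|K' IH]; intros s Hs.
  - simpl. apply CConv_nil.
  - simpl. destruct (g s) as [k sg] eqn:Eg.
    apply (CConv_ext _ _ (fun n => bd2 ((k, snd (gs n s)) :: map (gs n) (seq (S s) K')))).
    { intro n. simpl. rewrite H1 by lia. rewrite Eg. reflexivity. }
    apply CConv_bd2_cons.
    + pose proof (H2 s ltac:(lia)) as h. rewrite Eg in h. exact h.
    + apply IH. lia.
Qed.

Lemma map_nth_seq' {A : Type} (l : list A) (a : A) : l = map (fun i => nth i l a) (seq 0 (length l)).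
Proof.
  induction l as [|b l IH]; simpl; auto. f_equal.
  rewrite <- seq_shift, map_map. simpl. exact IH.
Qed.


Definition kz {X : Type} (z : ZZ X) : nat := fst (z (Cantor.to_nat (0, 0))%nat).
Definition cz {X : Type} (z : ZZ X) (i : nat) : Z :=
  (Z.of_nat (fst (z (Cantor.to_nat (1, i))%nat)) - Z.of_nat (fst (z (Cantor.to_nat (2, i))%nat)))%Z.
Definition wz {X : Type} (z : ZZ X) (j : nat) : nat := fst (z (Cantor.to_nat (3, j))%nat).
Definition vz {X : Type} (z : ZZ X) (i : nat) : nat -> X := fun q => snd (z (Cantor.to_nat (i, q))).
Definition chainZ {X : Type} (d : X -> X -> R) (x0 : X) (z : ZZ X) : chain2 X :=
  map (fun i => (cz z i, ext d x0 (vz z i) (wz z))) (seq 0 (kz z)).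
Definition Dset {X : Type} (d : X -> X -> R) (x0 : X) (f : nat -> R -> X) (a b : cantor) (z : ZZ X) : Prop :=
  (forall i, (i < kz z)%nat -> ModV d (vz z i) (wz z)) /\
  null_chain1 ((1%Z, concat f x0 a) :: ((-1)%Z, concat f x0 b) :: neg_chain1 (bd2 (chainZ d x0 z))).

Lemma D_to_sim {X : Type} (d : X -> X -> R) x0 f a b z :
  is_metric d -> complete_metric d -> Dset d x0 f a b z -> sim_rel d f x0 a b.
Proof.
  intros Hm Hc [HV HN]. exists (chainZ d x0 z). split; auto.
  intros e He. unfold chainZ in He. apply in_map_iff in He. destruct He as [i [<- Hi]].
  apply in_seq in Hi. simpl. apply ext_cont; auto. apply HV. lia.
Qed.

Lemma PConv_const {X : Type} (d : X -> X -> R) (g : R -> X) :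
  is_metric d -> PConv d (fun _ => g) g.
Proof. intros Hm u _ eps He. exists 0%nat. intros. rewrite metric_facts by auto. lra. Qed.

Lemma null_limit_C {X : Type} (d : X -> X -> R) x0 Ls L :
  is_metric d -> CConv d x0 Ls L -> (forall n, null_chain1 (Ls n)) -> null_chain1 L.
Proof. intros Hm [H1 H2] H. apply (null_limit d x0 L Ls); auto. Qed.

Lemma sim_to_D {X : Type} (d : X -> X -> R) x0 f a b :
  is_metric d -> complete_metric d -> sim_rel d f x0 a b -> exists z, Dset d x0 f a b z.
Proof.
  intros Hm Hc [C [HC HN]]. pose proof Hm as [Mp [Me [Ms Mt]]].
  set (K := length C).
  set (dd := (0%Z, fun _ _ : R => x0)).
  set (sg := fun i => snd (nth i C dd)).
  set (co := fun i => fst (nth i C dd)).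
  assert (Hcont : forall i, (i < K)%nat -> cont_on_simplex2 d (sg i)).
  { intros i Hi. apply (HC (nth i C dd)). apply nth_In. auto. }
  assert (Hw : forall j, exists N, forall i, (i <= K)%nat -> forall N', (N' >= N)%nat -> (i < K)%nat ->
     forall p p', inS p -> inS p' -> dist1 p p' < / (INR N' + 1) ->
       d (sg i (fst p) (snd p)) (sg i (fst p') (snd p')) <= (/2)^j).
  { intro j. apply fin_max. intros i _.
    destruct (Nat.lt_ge_cases i K) as [hi|hi]; [|exists 0%nat; intros; lia].
    destruct (heine_simplex d (sg i) Hm (Hcont i hi) ((/2)^j) (half_pow_pos j)) as [del [Hdel Hh]].
    destruct (inv_small del Hdel) as [N HNi]. exists N. intros N' HN' _ p p' Hp Hp' Hd.
    left. rewrite Ms. apply Hh; auto. unfold dist1 in Hd.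
    rewrite (Rabs_minus_sym (fst p')), (Rabs_minus_sym (snd p')).
    pose proof (inv_le N N' HN'). lra. }
  set (w := fun j => proj1_sig (constructive_indefinite_description _ (Hw j))).
  assert (Hw' : forall j i, (i < K)%nat -> UCmod d (sg i) (fun _ => w j) -> True) by auto.
  assert (HU : forall i, (i < K)%nat -> UCmod d (sg i) w).
  { intros i Hi j p p' Hp Hp' Hd. unfold w in Hd |- *.
    destruct (constructive_indefinite_description _ (Hw j)) as [N HN0]. simpl in Hd.
    apply (HN0 i ltac:(lia) N (le_n _) Hi); auto. }
  set (natp := fun n => match Cantor.of_nat n with
                        | (0, _) => K
                        | (1, i) => Z.to_nat (co i)
                        | (2, i) => Z.to_nat (- co i)
                        | (3, j) => w j
                        | _ => 0%nat end).
  set (xp := fun n => let '(i, q) := Cantor.of_nat n in sg i (fst (pt q)) (snd (pt q))).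
  set (z := fun n => (natp n, xp n) : nat * X).
  assert (Ek : kz z = K) by (unfold kz, z, natp; cbn [fst]; rewrite Cantor.cancel_of_to; auto).
  assert (Ec : forall i, cz z i = co i).
  { intro i. unfold cz, z, natp. cbn [fst]. rewrite !Cantor.cancel_of_to. lia. }
  assert (Ew : forall j, wz z j = w j).
  { intro j. unfold wz, z, natp. cbn [fst]. rewrite !Cantor.cancel_of_to. auto. }
  assert (Ev : forall i q, vz z i q = sg i (fst (pt q)) (snd (pt q))).
  { intros i q. unfold vz, z, xp. cbn [snd]. rewrite !Cantor.cancel_of_to. auto. }
  assert (HV : forall i, (i < kz z)%nat -> ModV d (vz z i) (wz z)).
  { intros i Hi j q q' H1 H2 H3. rewrite !Ev. rewrite Ew in H3. apply HU; [lia|auto..]. }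
  exists z. split; auto.
  apply (null_limit_C d x0 (fun _ => (1%Z, concat f x0 a) :: ((-1)%Z, concat f x0 b) :: neg_chain1 (bd2 C))); auto.
  apply (CConv_cons d x0 (fun _ => (1%Z, concat f x0 a))); auto; [apply PConv_const; auto|].
  apply (CConv_cons d x0 (fun _ => ((-1)%Z, concat f x0 b))); auto; [apply PConv_const; auto|].
  apply CConv_neg.
  unfold chainZ. rewrite Ek.
  apply (CConv_ext _ _ (fun _ => bd2 (map (fun i => nth i C dd) (seq 0 K)))).
  { intro n. unfold K. rewrite <- map_nth_seq'. auto. }
  apply CConv_bd2_seq.
  - intros n i Hi. simpl. rewrite Ec. auto.
  - intros i Hi s t Hst eps He. exists 0%nat. intros n _. simpl.
    assert (E1 : vz z i = fun q => sg i (fst (pt q)) (snd (pt q))) by (apply functional_extensionality; intro; apply Ev).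
    assert (E2 : wz z = w) by (apply functional_extensionality; intro; apply Ew).
    rewrite E1, E2, (ext_agree d x0 (sg i) w s t Hm Hc (HU i Hi) Hst).
    fold (sg i). rewrite metric_facts by auto. lra.
Qed.

Lemma zcoord_fst {X : Type} (d : X -> X -> R) (zn : nat -> ZZ X) z :
  is_metric d -> (forall eps, eps > 0 -> exists M, forall n, (n >= M)%nat -> dZZ d (zn n) z < eps) ->
  forall m, exists M, forall n, (n >= M)%nat -> fst (zn n m) = fst (z m).
Proof.
  intros Hm Hz m. destruct (Hz ((/2)^m) (half_pow_pos m)) as [M HM]. exists M.
  intros n Hn. apply (dZZ_coord d (zn n) z m Hm (HM n Hn)).
Qed.

Lemma zcoord_snd {X : Type} (d : X -> X -> R) (zn : nat -> ZZ X) z :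
  is_metric d -> (forall eps, eps > 0 -> exists M, forall n, (n >= M)%nat -> dZZ d (zn n) z < eps) ->
  forall m eps, eps > 0 -> exists M, forall n, (n >= M)%nat -> d (snd (zn n m)) (snd (z m)) < eps.
Proof.
  intros Hm Hz m eps He. pose proof (half_pow_pos m).
  destruct (Hz (Rmin ((/2)^m) (eps * (/2)^m))) as [M HM].
  { apply Rmin_pos; nra. }
  exists M. intros n Hn. specialize (HM n Hn).
  destruct (dZZ_coord d (zn n) z m Hm) as [_ H2].
  { eapply Rlt_le_trans; [exact HM|apply Rmin_l]. }
  pose proof (Rmin_r ((/2)^m) (eps * (/2)^m)). pose proof (pow2_half m). pose proof (pow2_pos m).
  assert (2^m * dZZ d (zn n) z < 2^m * (eps * (/2)^m)) by (apply Rmult_lt_compat_l; lra).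
  nra.
Qed.

Lemma concat_pconv {X : Type} (d : X -> X -> R) (f : nat -> R -> X) x (an : nat -> cantor) a :
  is_metric d -> (forall N, exists M, forall n, (n >= M)%nat -> forall i, (i < N)%nat -> an n i = a i) ->
  PConv d (fun n => concat f x (an n)) (concat f x a).
Proof.
  intros Hm Ha u Hu eps He. destruct (Ha (S (blk u))) as [M HM]. exists M. intros n Hn.
  assert (E : concat f x (an n) u = concat f x a u).
  { unfold concat. destruct (Rlt_dec u 1); auto. rewrite HM; auto. }
  rewrite E, metric_facts by auto. lra.
Qed.

Lemma seq_closed {X : Type} (d : X -> X -> R) x f (an bn : nat -> cantor) (zn : nat -> ZZ X) a b z :
  is_metric d -> complete_metric d ->
  (forall N, exists M, forall n, (n >= M)%nat -> forall i, (i < N)%nat -> an n i = a i /\ bn n i = b i) ->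
  (forall eps, eps > 0 -> exists M, forall n, (n >= M)%nat -> dZZ d (zn n) z < eps) ->
  (forall n, Dset d x f (an n) (bn n) (zn n)) -> Dset d x f a b z.
Proof.
  intros Hm Hc Hab Hz HD. pose proof Hm as [Mp [Me [Ms Mt]]].
  pose proof (zcoord_fst d zn z Hm Hz) as Cf.
  pose proof (zcoord_snd d zn z Hm Hz) as Cs.
  set (K := kz z).
  destruct (Cf (Cantor.to_nat (0, 0))%nat) as [M0 HM0].
  assert (Hk : forall n, (n >= M0)%nat -> kz (zn n) = K) by (intros; unfold kz; auto).
  destruct (fin_max K (fun i n => (i < K)%nat -> cz (zn n) i = cz z i)) as [M1 HM1].
  { intros i _. destruct (Cf (Cantor.to_nat (1, i))%nat) as [A HA].
    destruct (Cf (Cantor.to_nat (2, i))%nat) as [B HB].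
    exists (Nat.max A B). intros n Hn _. unfold cz. rewrite HA, HB by lia. auto. }
  assert (Hwj : forall j, exists N, forall n, (n >= N)%nat -> forall i, (i <= j)%nat -> wz (zn n) i = wz z i).
  { intro j. destruct (fin_max j (fun i n => wz (zn n) i = wz z i)) as [N HN].
    { intros i _. apply (Cf (Cantor.to_nat (3, i))%nat). }
    exists N. intros n Hn i Hi. apply HN; auto. }
  assert (HV : forall i, (i < K)%nat -> ModV d (vz z i) (wz z)).
  { intros i Hi j q q' H1 H2 H3. apply le_eps_le. intros eps He.
    destruct (Hwj j) as [A HA].
    destruct (Cs (Cantor.to_nat (i, q)) (eps/2) ltac:(lra)) as [B HB].
    destruct (Cs (Cantor.to_nat (i, q')) (eps/2) ltac:(lra)) as [C HC].
    set (n := Nat.max M0 (Nat.max A (Nat.max B C))).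
    assert (Hmod := proj1 (HD n) i ltac:(rewrite Hk by lia; auto) j q q' H1 H2 ltac:(rewrite HA by lia; auto)).
    specialize (HB n ltac:(lia)). specialize (HC n ltac:(lia)). unfold vz in *.
    pose proof (Mt (snd (z (Cantor.to_nat (i, q)))) (snd (zn n (Cantor.to_nat (i, q)))) (snd (z (Cantor.to_nat (i, q'))))).
    pose proof (Mt (snd (zn n (Cantor.to_nat (i, q)))) (snd (zn n (Cantor.to_nat (i, q')))) (snd (z (Cantor.to_nat (i, q'))))).
    pose proof (Ms (snd (z (Cantor.to_nat (i, q)))) (snd (zn n (Cantor.to_nat (i, q))))). lra. }
  split; [exact HV|].
  set (M := Nat.max M0 M1).
  apply (null_limit_C d x (fun n => (1%Z, concat f x (an (n + M)%nat)) :: ((-1)%Z, concat f x (bn (n + M)%nat))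
                          :: neg_chain1 (bd2 (chainZ d x (zn (n + M)%nat))))); auto.
  2:{ intro n. apply (HD (n + M)%nat). }
  apply (CConv_cons d x (fun n => (1%Z, concat f x (an (n + M)%nat)))); auto.
  { apply concat_pconv; auto. intro N. destruct (Hab N) as [A HA]. exists A. intros n Hn i Hi. apply HA; auto; lia. }
  apply (CConv_cons d x (fun n => ((-1)%Z, concat f x (bn (n + M)%nat)))); auto.
  { apply concat_pconv; auto. intro N. destruct (Hab N) as [A HA]. exists A. intros n Hn i Hi. apply HA; auto; lia. }
  apply CConv_neg. unfold chainZ.
  apply (CConv_ext _ _ (fun n => bd2 (map (fun i => (cz (zn (n + M)%nat) i, ext d x (vz (zn (n + M)%nat) i) (wz (zn (n + M)%nat)))) (seq 0 K)))).
  { intro n. rewrite Hk by lia. auto. }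
  apply CConv_bd2_seq.
  - intros n i Hi. simpl. apply HM1; auto; lia.
  - intros i Hi s t Hst. simpl.
    apply (ext_conv d x (fun n => vz (zn (n + M)%nat) i) (fun n => wz (zn (n + M)%nat)) (vz z i) (wz z) s t); auto.
    + intro n. apply (proj1 (HD (n + M)%nat)). rewrite Hk by lia. auto.
    + intro j. destruct (Hwj j) as [A HA]. exists A. intros n Hn i' Hi'. apply HA; auto; lia.
    + intros q eps He. destruct (Cs (Cantor.to_nat (i, q)) eps He) as [A HA]. exists A. intros n Hn.
      unfold vz. apply HA. lia.
Qed.

Lemma closed_of_seq {Z : Type} (dZ : Z -> Z -> R) (D : cantor -> cantor -> Z -> Prop) :
  is_metric dZ ->
  (forall (an bn : nat -> cantor) (zn : nat -> Z) a b z,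
    (forall N, exists M, forall n, (n >= M)%nat -> forall i, (i < N)%nat -> an n i = a i /\ bn n i = b i) ->
    (forall eps, eps > 0 -> exists M, forall n, (n >= M)%nat -> dZ (zn n) z < eps) ->
    (forall n, D (an n) (bn n) (zn n)) -> D a b z) ->
  closed_in_CCZ dZ D.
Proof.
  intros [Mp [Me [Ms Mt]]] HS a b z HnD. apply NNPP. intro Hno.
  assert (Hn : forall n : nat, exists t : cantor * cantor * Z,
    (forall i, (i < n)%nat -> fst (fst t) i = a i /\ snd (fst t) i = b i) /\
    dZ z (snd t) < / (INR n + 1) /\ D (fst (fst t)) (snd (fst t)) (snd t)).
  { intro n. apply NNPP. intro H. apply Hno. exists n, (/ (INR n + 1)). split; [apply inv_pos|].
    intros a' b' z' H1 H2 H3. apply H. exists (a', b', z'). simpl. auto. }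
  set (T := fun n => proj1_sig (constructive_indefinite_description _ (Hn n))).
  assert (HT : forall n, (forall i, (i < n)%nat -> fst (fst (T n)) i = a i /\ snd (fst (T n)) i = b i) /\
    dZ z (snd (T n)) < / (INR n + 1) /\ D (fst (fst (T n))) (snd (fst (T n))) (snd (T n))).
  { intro n. unfold T. destruct (constructive_indefinite_description _ (Hn n)); simpl; auto. }
  apply HnD. apply (HS (fun n => fst (fst (T n))) (fun n => snd (fst (T n))) (fun n => snd (T n))).
  - intro N. exists N. intros n Hn' i Hi. apply (proj1 (HT n)). lia.
  - intros eps He. destruct (inv_small eps He) as [k Hk]. exists k. intros n Hn'.
    rewrite Ms. pose proof (proj1 (proj2 (HT n))). pose proof (inv_le k n Hn'). lra.
  - intro n. apply HT.
Qed.

Theorem lemma2p3_dev (X : Type) (d : X -> X -> R) (x : X) (f : nat -> R -> X) :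
  peano_continuum d ->
  (forall n, is_loop d (f n) x) ->
  (forall n s t, unit_int s -> unit_int t -> d (f n s) (f n t) <= (/ 2) ^ n) ->
  (forall n, ~ nulhomologous d (f n)) ->
  analytic_CC (sim_rel d f x) /\ equivalence_rel (sim_rel d f x) /\
  (forall a b : cantor, differ_exactly_once a b -> ~ sim_rel d f x a b).
Proof.
  intros [Hm [Hcomp _]] Hl Hdiam Hnul.
  assert (Hc : complete_metric d) by (apply compact_complete; auto).
  split; [|split].
  - exists (ZZ X), (dZZ d), (Dset d x f). split; [apply ZZ_polish; auto|split].
    + apply closed_of_seq; [apply ZZ_polish; auto|].
      intros an bn zn a b z H1 H2 H3. apply (seq_closed d x f an bn zn); auto.
    + intros a b. split.
      * apply sim_to_D; auto.
      * intros [z Hz]. apply (D_to_sim d x f a b z); auto.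
  - apply sim_equiv.
  - apply single_diff_main; auto.
Qed.


Theorem lemma2p3 (X : Type) (d : X -> X -> R) (x : X) (f : nat -> R -> X) :
  peano_continuum d ->
  (forall n, is_loop d (f n) x) ->
  (forall n s t, unit_int s -> unit_int t -> d (f n s) (f n t) <= (/ 2) ^ n) ->
  (forall n, ~ nulhomologous d (f n)) ->
  analytic_CC (sim_rel d f x) /\ equivalence_rel (sim_rel d f x) /\
  (forall a b : cantor, differ_exactly_once a b -> ~ sim_rel d f x a b).
Proof. exact (lemma2p3_dev X d x f). Qed.
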